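(* Let $(\mathcal L,f)$ be a Lagrangian pair with $\mathcal L$ Kählerian. If there is a point $q\in\mathcal L$ which is real ($\tau q=q$) and such that $f(q)\notin\mathbb{R}$, then there is an open neighborhood $U\subset\mathcal L$ of $q$ such that the Lagrangian cone $\mathrm{con}(U,f|_U)$ is Kählerian, i.e. the Hermitian form $\hat\gamma=\sqrt{-1}\,\hat\Omega(\cdot,\hat\tau\cdot)$ of $\mathbb{C}^{2n+2}$ restricts to a non-degenerate form on it.
   Context: $\mathbb{C}^{2n}$: coordinates $(z,w)$, $\Omega=\sum dz^i\wedge dw_i$, real structure $\tau$ (complex conjugation), $\gamma=\sqrt{-1}\Omega(\cdot,\tau\cdot)$, $\eta_q=\Omega(q,\cdot)$. A Lagrangian pair $(\mathcal L,f)$: complex Lagrangian submanifold $\mathcal L\subset\mathbb{C}^{2n}$, holomorphic $f$ with $df=-\eta|_{\mathcal L}$; $\mathcal L$ is Kählerian if $\gamma|_{\mathcal L}$ is non-degenerate. $\mathbb{C}^{2n+2}=\mathbb{C}^2\times\mathbb{C}^{2n}$ with coordinates $(z^0,w_0,z,w)$, $\hat\Omega=dz^0\wedge dw_0+\Omega$, real structure $\hat\tau$ (complex conjugation). $\mathrm{con}(\mathcal L,f):=\mathbb{C}^*\cdot\{(1,f(q),q)\mid q\in\mathcal L\}$. *)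

(* Defs.v *)
From Stdlib Require Import Reals.
Open Scope R_scope.

Record Cx := mkC { Re : R; Im : R }.
Definition C0 : Cx := mkC 0 0.
Definition C1 : Cx := mkC 1 0.
Definition Ci : Cx := mkC 0 1.
Definition RtoC (r : R) : Cx := mkC r 0.
Definition Cadd (a b : Cx) : Cx := mkC (Re a + Re b) (Im a + Im b).
Definition Copp (a : Cx) : Cx := mkC (- Re a) (- Im a).
Definition Csub (a b : Cx) : Cx := Cadd a (Copp b).
Definition Cmul (a b : Cx) : Cx :=
  mkC (Re a * Re b - Im a * Im b) (Re a * Im b + Im a * Re b).
Definition Cconj (a : Cx) : Cx := mkC (Re a) (- Im a).

(** * Vectors: Cx^N is represented by functions nat -> Cx supported on [0,N) *)
Definition CV := nat -> Cx.
Definition supp (N : nat) (v : CV) : Prop := forall i, (N <= i)%nat -> v i = C0.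
Definition vzero : CV := fun _ => C0.
Definition vadd (u v : CV) : CV := fun i => Cadd (u i) (v i).
Definition vsub (u v : CV) : CV := fun i => Csub (u i) (v i).
Definition vscale (a : Cx) (v : CV) : CV := fun i => Cmul a (v i).
Definition ebasis (j : nat) : CV := fun i => if Nat.eqb i j then C1 else C0.

Fixpoint sumC (n : nat) (F : nat -> Cx) : Cx :=
  match n with O => C0 | S m => Cadd (sumC m F) (F m) end.
Fixpoint sumR (n : nat) (F : nat -> R) : R :=
  match n with O => 0 | S m => sumR m F + F m end.

(** l^1-type norm on Cx^N (all norms are equivalent) *)
Definition normN (N : nat) (v : CV) : R :=
  sumR N (fun i => Rabs (Re (v i)) + Rabs (Im (v i))).

Definition is_open (N : nat) (W : CV -> Prop) : Prop :=
  forall x, W x -> supp N x /\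
    exists r, r > 0 /\ forall y, supp N y -> normN N (vsub y x) < r -> W y.

Definition cont_within (n N : nat) (h : CV -> CV) (D : CV -> Prop) (x : CV) : Prop :=
  forall eps, eps > 0 -> exists del, del > 0 /\
    forall y, D y -> normN n (vsub y x) < del -> normN N (vsub (h y) (h x)) < eps.

Definition dderiv (g : CV -> Cx) (x v : CV) (d : Cx) : Prop :=
  derivable_pt_lim (fun t => Re (g (vadd x (vscale (RtoC t) v)))) 0 (Re d) /\
  derivable_pt_lim (fun t => Im (g (vadd x (vscale (RtoC t) v)))) 0 (Im d).

(** g : Cx^n ⊇ D -> Cx^N is holomorphic (Cx^1 with Cauchy–Riemann equations),
    with complex partial derivatives dg j = ∂g/∂z_j *)
Definition holo_map (n N : nat) (g : CV -> CV) (D : CV -> Prop)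
  (dg : nat -> CV -> CV) : Prop :=
  forall x, D x -> forall j, (j < n)%nat ->
    (forall i, dderiv (fun y => g y i) x (ebasis j) (dg j x i)) /\
    (forall i, dderiv (fun y => g y i) x (vscale Ci (ebasis j)) (Cmul Ci (dg j x i))) /\
    cont_within n N (dg j) D x.

Definition holo_fun (n : nat) (h : CV -> Cx) (D : CV -> Prop) : Prop :=
  exists dh, holo_map n 1 (fun x _ => h x) D dh.

(** holomorphic chart phi : D -> S ∩ W of a subset S ⊆ Cx^N, D open in Cx^n:
    holomorphic immersion which is a homeomorphism onto S ∩ W *)
Definition cchart (n N : nat) (S : CV -> Prop) (phi : CV -> CV)
  (D W : CV -> Prop) : Prop :=
  is_open n D /\ is_open N W /\
  (exists dphi, holo_map n N phi D dphi /\
     forall x, D x -> forall a : nat -> Cx,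
       (forall i, (i < N)%nat -> sumC n (fun j => Cmul (a j) (dphi j x i)) = C0) ->
       forall j, (j < n)%nat -> a j = C0) /\
  (forall x, D x -> S (phi x) /\ W (phi x)) /\
  (forall y, S y -> W y -> exists x, D x /\ phi x = y) /\
  (forall x x', D x -> D x' -> phi x = phi x' -> x = x') /\
  (forall x, D x -> forall eps, eps > 0 -> exists del, del > 0 /\
     forall x', D x' -> normN N (vsub (phi x') (phi x)) < del ->
       normN n (vsub x' x) < eps).

Definition csubmfd (n N : nat) (S : CV -> Prop) : Prop :=
  (forall y, S y -> supp N y) /\
  forall p, S p -> exists phi D W, cchart n N S phi D W /\ W p.

Definition holo_on (n N : nat) (S : CV -> Prop) (f : CV -> Cx) : Prop :=
  forall phi D W, cchart n N S phi D W -> holo_fun n (fun x => f (phi x)) D.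

Definition curve_in (S : CV -> Prop) (p v : CV) (c : R -> CV) (eps : R) : Prop :=
  eps > 0 /\ c 0 = p /\ (forall t, Rabs t < eps -> S (c t)) /\
  forall i, derivable_pt_lim (fun t => Re (c t i)) 0 (Re (v i)) /\
            derivable_pt_lim (fun t => Im (c t i)) 0 (Im (v i)).

Definition tangent (S : CV -> Prop) (p v : CV) : Prop :=
  exists c eps, curve_in S p v c eps.

(** * Symplectic data on Cx^{2n}: z^i = v i, w_i = v (n+i) (i < n) *)
Definition Omega (n : nat) (u v : CV) : Cx :=
  sumC n (fun i => Csub (Cmul (u i) (v (n + i)%nat)) (Cmul (u (n + i)%nat) (v i))).
Definition tau (v : CV) : CV := fun i => Cconj (v i).
Definition gamma (n : nat) (u v : CV) : Cx := Cmul Ci (Omega n u (tau v)).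

(** * Cx^{2n+2} = Cx^2 x Cx^{2n}: coordinates (z^0, w_0, z, w) stored as
      P 0 = z^0, P 1 = w_0, P (2+k) = k-th coordinate of the Cx^{2n} part *)
Definition lift (a b : Cx) (q : CV) : CV :=
  fun k => match k with O => a | S O => b | S (S k') => q k' end.
Definition shift2 (u : CV) : CV := fun k => u (S (S k)).
Definition hOmega (n : nat) (u v : CV) : Cx :=
  Cadd (Csub (Cmul (u 0%nat) (v 1%nat)) (Cmul (u 1%nat) (v 0%nat)))
       (Omega n (shift2 u) (shift2 v)).
Definition hgamma (n : nat) (u v : CV) : Cx := Cmul Ci (hOmega n u (tau v)).

Definition nondeg_on (B : CV -> CV -> Cx) (S : CV -> Prop) : Prop :=
  forall p, S p -> forall v, tangent S p v ->
    (forall w, tangent S p w -> B v w = C0) -> v = vzero.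

Definition lagrangian (n : nat) (L : CV -> Prop) : Prop :=
  csubmfd n (2 * n) L /\
  forall p, L p -> forall v w, tangent L p v -> tangent L p w -> Omega n v w = C0.

(** Lagrangian pair (L, f): f holomorphic on L with df = - eta|_L,
    eta_p = Omega(p, .) *)
Definition lag_pair (n : nat) (L : CV -> Prop) (f : CV -> Cx) : Prop :=
  lagrangian n L /\ holo_on n (2 * n) L f /\
  forall p v c eps, curve_in L p v c eps ->
    derivable_pt_lim (fun t => Re (f (c t))) 0 (Re (Copp (Omega n p v))) /\
    derivable_pt_lim (fun t => Im (f (c t))) 0 (Im (Copp (Omega n p v))).

Definition kaehlerian (n : nat) (L : CV -> Prop) : Prop := nondeg_on (gamma n) L.

Definition cone (U : CV -> Prop) (f : CV -> Cx) : CV -> Prop :=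
  fun P => exists lam q, lam <> C0 /\ U q /\ P = vscale lam (lift C1 (f q) q).

Definition rel_open (N : nat) (L U : CV -> Prop) : Prop :=
  forall p, U p -> L p /\
    exists r, r > 0 /\ forall p', L p' -> normN N (vsub p' p) < r -> U p'.

(* Main.v *)
Require Import Defs.
From Stdlib Require Import Reals Lra Lia FunctionalExtensionality Classical.
Open Scope R_scope.

Lemma Cx_ext a b : Re a = Re b -> Im a = Im b -> a = b.
Proof. destruct a, b; simpl; intros; subst; reflexivity. Qed.

Ltac cx := apply Cx_ext; simpl; ring.

Definition cnorm (z : Cx) : R := Rabs (Re z) + Rabs (Im z).

Lemma cnorm_ge0 z : 0 <= cnorm z.
Proof. unfold cnorm; pose proof (Rabs_pos (Re z)); pose proof (Rabs_pos (Im z)); lra. Qed.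

Lemma Rabs0 x : Rabs x <= 0 -> x = 0.
Proof. intros H. destruct (Req_dec x 0); auto. pose proof (Rabs_pos_lt x H0); lra. Qed.

Lemma cnorm0 z : cnorm z = 0 -> z = C0.
Proof. unfold cnorm; intros H. pose proof (Rabs_pos (Re z)); pose proof (Rabs_pos (Im z)).
  apply Cx_ext; simpl; apply Rabs0; lra. Qed.

Lemma cnorm_C0 : cnorm C0 = 0.
Proof. unfold cnorm; simpl; rewrite Rabs_R0; ring. Qed.

Lemma cnorm_add a b : cnorm (Cadd a b) <= cnorm a + cnorm b.
Proof. unfold cnorm; simpl. pose proof (Rabs_triang (Re a) (Re b)). pose proof (Rabs_triang (Im a) (Im b)). lra. Qed.

Lemma cnorm_opp a : cnorm (Copp a) = cnorm a.
Proof. unfold cnorm; simpl; rewrite !Rabs_Ropp; ring. Qed.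

Lemma cnorm_sub a b : cnorm (Csub a b) <= cnorm a + cnorm b.
Proof. unfold Csub. rewrite <- (cnorm_opp b). apply cnorm_add. Qed.

Lemma cnorm_mul a b : cnorm (Cmul a b) <= cnorm a * cnorm b.
Proof. unfold cnorm; simpl.
  pose proof (Rabs_triang (Re a * Re b) (- (Im a * Im b))).
  pose proof (Rabs_triang (Re a * Im b) (Im a * Re b)).
  rewrite Rabs_Ropp in H. rewrite !Rabs_mult in H, H0.
  unfold Rminus. nra. Qed.

Lemma cnorm_Re a : Rabs (Re a) <= cnorm a.
Proof. unfold cnorm; pose proof (Rabs_pos (Im a)); lra. Qed.
Lemma cnorm_Im a : Rabs (Im a) <= cnorm a.
Proof. unfold cnorm; pose proof (Rabs_pos (Re a)); lra. Qed.

Lemma cnorm_RtoC r : cnorm (RtoC r) = Rabs r.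
Proof. unfold cnorm; simpl; rewrite Rabs_R0; ring. Qed.

Lemma cnorm_conj a : cnorm (Cconj a) = cnorm a.
Proof. unfold cnorm; simpl; rewrite Rabs_Ropp; ring. Qed.

Lemma Cadd_comm a b : Cadd a b = Cadd b a. Proof. cx. Qed.
Lemma Cadd_assoc a b c : Cadd (Cadd a b) c = Cadd a (Cadd b c). Proof. cx. Qed.
Lemma Cadd_0_l a : Cadd C0 a = a. Proof. destruct a; cx. Qed.
Lemma Cadd_0_r a : Cadd a C0 = a. Proof. destruct a; cx. Qed.
Lemma Cmul_comm a b : Cmul a b = Cmul b a. Proof. cx. Qed.
Lemma Cmul_assoc a b c : Cmul (Cmul a b) c = Cmul a (Cmul b c). Proof. cx. Qed.
Lemma Cmul_0_l a : Cmul C0 a = C0. Proof. cx. Qed.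
Lemma Cmul_0_r a : Cmul a C0 = C0. Proof. cx. Qed.
Lemma Cmul_1_l a : Cmul Defs.C1 a = a. Proof. destruct a; cx. Qed.
Lemma Cmul_add_r a b c : Cmul a (Cadd b c) = Cadd (Cmul a b) (Cmul a c). Proof. cx. Qed.
Lemma Cmul_add_l a b c : Cmul (Cadd a b) c = Cadd (Cmul a c) (Cmul b c). Proof. cx. Qed.

Definition Cinv (a : Cx) : Cx :=
  mkC (Re a / (Re a * Re a + Im a * Im a)) (- Im a / (Re a * Re a + Im a * Im a)).

Lemma C0_iff a : a <> C0 -> Re a * Re a + Im a * Im a <> 0.
Proof. intros H E. apply H. apply Cx_ext; simpl; nra. Qed.

Lemma Cinv_l a : a <> C0 -> Cmul (Cinv a) a = Defs.C1.
Proof. intros H. pose proof (C0_iff a H). apply Cx_ext; simpl; field; auto. Qed.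

Lemma Cmul_eq0 a b : Cmul a b = C0 -> a <> C0 -> b = C0.
Proof. intros E H. rewrite <- (Cmul_1_l b), <- (Cinv_l a H), Cmul_assoc, E. apply Cmul_0_r. Qed.

Lemma Ci_neq0 : Ci <> C0.
Proof. intros E. assert (Im Ci = Im C0) by (rewrite E; auto). simpl in H. lra. Qed.

Lemma Cconj_neq0 a : a <> C0 -> Cconj a <> C0.
Proof. intros H E; apply H. apply Cx_ext; assert (H1 := f_equal Re E); assert (H2 := f_equal Im E); simpl in *; lra. Qed.

Lemma sumC_ext m F G : (forall j, (j < m)%nat -> F j = G j) -> sumC m F = sumC m G.
Proof. induction m; simpl; intros; auto. rewrite IHm by (intros; apply H; lia). rewrite H by lia; auto. Qed.

Lemma sumR_ext m F G : (forall j, (j < m)%nat -> F j = G j) -> sumR m F = sumR m G.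
Proof. induction m; simpl; intros; auto. rewrite IHm by (intros; apply H; lia). rewrite H by lia; auto. Qed.

Lemma sumC_add m F G : sumC m (fun j => Cadd (F j) (G j)) = Cadd (sumC m F) (sumC m G).
Proof. induction m; simpl. cx. rewrite IHm. cx. Qed.

Lemma sumC_opp m F : sumC m (fun j => Copp (F j)) = Copp (sumC m F).
Proof. induction m; simpl. cx. rewrite IHm. cx. Qed.

Lemma sumC_sub m F G : sumC m (fun j => Csub (F j) (G j)) = Csub (sumC m F) (sumC m G).
Proof. unfold Csub. rewrite sumC_add, sumC_opp. auto. Qed.

Lemma sumC_scal m a F : sumC m (fun j => Cmul a (F j)) = Cmul a (sumC m F).
Proof. induction m; simpl. cx. rewrite IHm. cx. Qed.

Lemma sumC_scal_r m a F : sumC m (fun j => Cmul (F j) a) = Cmul (sumC m F) a.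
Proof. induction m; simpl. cx. rewrite IHm. cx. Qed.

Lemma sumC_zero m F : (forall j, (j < m)%nat -> F j = C0) -> sumC m F = C0.
Proof. induction m; simpl; intros; auto. rewrite IHm by (intros; apply H; lia). rewrite H by lia. cx. Qed.

Lemma sumC_swap m k F : sumC m (fun j => sumC k (fun i => F j i)) = sumC k (fun i => sumC m (fun j => F j i)).
Proof. induction m; simpl. symmetry; apply sumC_zero; auto.
  rewrite IHm. rewrite <- sumC_add. auto. Qed.

Lemma sumC_shift m F : sumC (S m) F = Cadd (F 0%nat) (sumC m (fun j => F (S j))).
Proof. induction m; simpl. cx. simpl in IHm. rewrite IHm. cx. Qed.

Lemma sumR_shift m F : sumR (S m) F = F 0%nat + sumR m (fun j => F (S j)).
Proof. induction m; simpl. ring. simpl in IHm. rewrite IHm. ring. Qed.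

Lemma Re_sumC m F : Re (sumC m F) = sumR m (fun j => Re (F j)).
Proof. induction m; simpl; auto. rewrite IHm; auto. Qed.
Lemma Im_sumC m F : Im (sumC m F) = sumR m (fun j => Im (F j)).
Proof. induction m; simpl; auto. rewrite IHm; auto. Qed.

Lemma Cconj_sumC m F : Cconj (sumC m F) = sumC m (fun j => Cconj (F j)).
Proof. induction m; simpl. cx. rewrite <- IHm. cx. Qed.

Lemma sumR_le m F G : (forall j, (j < m)%nat -> F j <= G j) -> sumR m F <= sumR m G.
Proof. induction m; simpl; intros. lra. pose proof (H m ltac:(lia)). pose proof (IHm ltac:(intros; apply H; lia)). lra. Qed.

Lemma sumR_nonneg m F : (forall j, (j < m)%nat -> 0 <= F j) -> 0 <= sumR m F.
Proof. intros. replace 0 with (sumR m (fun _ => 0)). apply sumR_le; auto.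
  clear H; induction m; simpl; auto; lra. Qed.

Lemma sumR_const m c : sumR m (fun _ => c) = INR m * c.
Proof. induction m; simpl sumR. simpl; ring. rewrite IHm, S_INR; ring. Qed.

Lemma sumR_add m F G : sumR m (fun j => F j + G j) = sumR m F + sumR m G.
Proof. induction m; simpl. ring. rewrite IHm; ring. Qed.

Lemma sumR_scal m a F : sumR m (fun j => a * F j) = a * sumR m F.
Proof. induction m; simpl. ring. rewrite IHm; ring. Qed.

Lemma sumR_term m F j : (forall j, (j < m)%nat -> 0 <= F j) -> (j < m)%nat -> F j <= sumR m F.
Proof. induction m; simpl; intros. lia. destruct (Nat.eq_dec j m). subst.
  pose proof (sumR_nonneg m F ltac:(intros; apply H; lia)). lra.
  pose proof (IHm ltac:(intros; apply H; lia) ltac:(lia)). pose proof (H m ltac:(lia)). lra. Qed.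

Lemma sumR_mono m k F : (forall j, 0 <= F j) -> (m <= k)%nat -> sumR m F <= sumR k F.
Proof. intros H Hk. induction Hk. lra. simpl. pose proof (H m0). lra. Qed.

Lemma sumR_swap m k F : sumR m (fun j => sumR k (fun i => F j i)) = sumR k (fun i => sumR m (fun j => F j i)).
Proof. induction m; simpl. symmetry. clear. induction k; simpl; auto. rewrite IHk; ring.
  rewrite IHm. rewrite <- sumR_add. auto. Qed.

Lemma cnorm_sum m F : cnorm (sumC m F) <= sumR m (fun j => cnorm (F j)).
Proof. induction m; simpl. rewrite cnorm_C0; lra. pose proof (cnorm_add (sumC m F) (F m)). lra. Qed.

Lemma sumR_cnorm_nonneg m F : 0 <= sumR m (fun j => cnorm (F j)).
Proof. apply sumR_nonneg; intros; apply cnorm_ge0. Qed.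

Lemma normN_ge0 N v : 0 <= normN N v.
Proof. apply sumR_cnorm_nonneg. Qed.

Lemma normN_eq N v : normN N v = sumR N (fun i => cnorm (v i)).
Proof. reflexivity. Qed.

Lemma normN_comp N v i : (i < N)%nat -> cnorm (v i) <= normN N v.
Proof. intros. rewrite normN_eq. apply (sumR_term N (fun i => cnorm (v i))); auto. intros; apply cnorm_ge0. Qed.

Lemma normN_zero N v : normN N v = 0 -> forall i, (i < N)%nat -> v i = C0.
Proof. intros. apply cnorm0. pose proof (normN_comp N v i H0). pose proof (cnorm_ge0 (v i)). lra. Qed.

Lemma normN_triang N u v : normN N (vadd u v) <= normN N u + normN N v.
Proof. rewrite !normN_eq, <- sumR_add. apply sumR_le. intros; apply cnorm_add. Qed.

Lemma normN_sub_triang N u v w : normN N (vsub u w) <= normN N (vsub u v) + normN N (vsub v w).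
Proof. rewrite !normN_eq, <- sumR_add. apply sumR_le. intros. unfold vsub.
  replace (Csub (u j) (w j)) with (Cadd (Csub (u j) (v j)) (Csub (v j) (w j))) by cx. apply cnorm_add. Qed.

Lemma normN_sub_sym N u v : normN N (vsub u v) = normN N (vsub v u).
Proof. rewrite !normN_eq. apply sumR_ext; intros. unfold vsub.
  replace (Csub (v j) (u j)) with (Copp (Csub (u j) (v j))) by cx. rewrite cnorm_opp; auto. Qed.

Lemma normN_scal N a v : normN N (vscale a v) <= cnorm a * normN N v.
Proof. rewrite !normN_eq, <- sumR_scal. apply sumR_le; intros; apply cnorm_mul. Qed.

Definition vsum (m : nat) (c : nat -> Cx) (U : nat -> CV) : CV :=
  fun i => sumC m (fun j => Cmul (c j) (U j i)).

Lemma Omega_conj n u v : Cconj (Omega n u v) = Omega n (tau u) (tau v).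
Proof. unfold Omega, tau. rewrite Cconj_sumC. apply sumC_ext; intros. cx. Qed.

Lemma Omega_self n u : Omega n u u = C0.
Proof. unfold Omega. apply sumC_zero; intros. cx. Qed.

Lemma Omega_antisym n u v : Omega n u v = Copp (Omega n v u).
Proof. unfold Omega. rewrite <- sumC_opp. apply sumC_ext; intros; cx. Qed.

Lemma Omega_sum_l n m c U w :
  Omega n (vsum m c U) w = sumC m (fun j => Cmul (c j) (Omega n (U j) w)).
Proof. unfold Omega, vsum.
  transitivity (sumC n (fun i => sumC m (fun j => Cmul (c j)
      (Csub (Cmul (U j i) (w (n + i)%nat)) (Cmul (U j (n + i)%nat) (w i)))))).
  apply sumC_ext; intros. rewrite <- sumC_scal_r, <- sumC_scal_r, <- sumC_sub. apply sumC_ext; intros; cx.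
  rewrite sumC_swap. apply sumC_ext; intros. rewrite sumC_scal. auto. Qed.

Lemma Omega_sum_r n m c U w :
  Omega n w (vsum m c U) = sumC m (fun j => Cmul (c j) (Omega n w (U j))).
Proof. rewrite Omega_antisym, Omega_sum_l. rewrite <- sumC_opp. apply sumC_ext; intros.
  rewrite (Omega_antisym n w). cx. Qed.

Lemma Omega_scal_l n a u w : Omega n (vscale a u) w = Cmul a (Omega n u w).
Proof. unfold Omega, vscale. rewrite <- sumC_scal. apply sumC_ext; intros; cx. Qed.

Lemma Omega_scal_r n a u w : Omega n w (vscale a u) = Cmul a (Omega n w u).
Proof. unfold Omega, vscale. rewrite <- sumC_scal. apply sumC_ext; intros; cx. Qed.

Lemma Omega_add_l n u v w : Omega n (vadd u v) w = Cadd (Omega n u w) (Omega n v w).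
Proof. unfold Omega, vadd. rewrite <- sumC_add. apply sumC_ext; intros; cx. Qed.
Lemma Omega_add_r n u v w : Omega n w (vadd u v) = Cadd (Omega n w u) (Omega n w v).
Proof. unfold Omega, vadd. rewrite <- sumC_add. apply sumC_ext; intros; cx. Qed.
Lemma Omega_sub_l n u v w : Omega n (vsub u v) w = Csub (Omega n u w) (Omega n v w).
Proof. unfold Omega, vsub. rewrite <- sumC_sub. apply sumC_ext; intros; cx. Qed.
Lemma Omega_sub_r n u v w : Omega n w (vsub u v) = Csub (Omega n w u) (Omega n w v).
Proof. unfold Omega, vsub. rewrite <- sumC_sub. apply sumC_ext; intros; cx. Qed.

Lemma hOmega_sum_l n m c U w :
  hOmega n (vsum m c U) w = sumC m (fun j => Cmul (c j) (hOmega n (U j) w)).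
Proof. unfold hOmega.
  assert (shift2 (vsum m c U) = vsum m c (fun j => shift2 (U j))) by reflexivity.
  rewrite H, Omega_sum_l. unfold vsum. rewrite <- !sumC_scal_r, <- sumC_sub, <- sumC_add.
  apply sumC_ext; intros; cx. Qed.

Lemma hOmega_scal_r n a u w : hOmega n w (vscale a u) = Cmul a (hOmega n w u).
Proof. unfold hOmega. assert (shift2 (vscale a u) = vscale a (shift2 u)) by reflexivity.
  rewrite H, Omega_scal_r. unfold vscale; cx. Qed.

Lemma tau_scal a u : tau (vscale a u) = vscale (Cconj a) (tau u).
Proof. apply functional_extensionality; intros; unfold tau, vscale; cx. Qed.

Definition LinB (N : nat) (k : CV -> Cx) : Prop :=
  (forall u w, k (vadd u w) = Cadd (k u) (k w)) /\
  (forall a u, k (vscale a u) = Cmul a (k u)).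

Definition delta (j k : nat) : Cx := if Nat.eqb j k then Defs.C1 else C0.

Lemma vsum_S m c U : vsum (S m) c U = vadd (vsum m c U) (vscale (c m) (U m)).
Proof. reflexivity. Qed.

Lemma LinB_zero N k : LinB N k -> k (fun _ => C0) = C0.
Proof. intros [_ H]. assert ((fun _ : nat => C0) = vscale C0 (fun _ => C0)).
  apply functional_extensionality; intros; unfold vscale; cx.
  rewrite H0, H. cx. Qed.

Lemma LinB_vsum N k m c U : LinB N k -> k (vsum m c U) = sumC m (fun l => Cmul (c l) (k (U l))).
Proof. intros HL. induction m.
  - simpl. apply (LinB_zero N k HL).
  - rewrite vsum_S. destruct HL as [Ha Hs]. rewrite Ha, Hs, IHm. reflexivity. Qed.

Lemma sumC_delta m c j : (j < m)%nat -> sumC m (fun l => Cmul (c l) (delta j l)) = c j.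
Proof. induction m; intros. lia. simpl. unfold delta at 2.
  destruct (Nat.eq_dec j m).
  - subst. rewrite Nat.eqb_refl. rewrite sumC_zero. destruct (c m); cx.
    intros j0 Hj0. unfold delta. destruct (Nat.eqb_spec m j0). lia. cx.
  - destruct (Nat.eqb_spec j m). lia. rewrite IHm by lia. destruct (c j); cx. Qed.

Definition indep (N m : nat) (col : nat -> CV) : Prop :=
  forall a : nat -> Cx, (forall i, (i < N)%nat -> vsum m a col i = C0) ->
    forall j, (j < m)%nat -> a j = C0.

Definition leftinv (N m : nat) (col : nat -> CV) (k : nat -> CV -> Cx) (C : R) : Prop :=
  (forall j, (j < m)%nat -> LinB N (k j)) /\
  (forall j l, (j < m)%nat -> (l < m)%nat -> k j (col l) = delta j l) /\
  0 <= C /\ (forall j w, (j < m)%nat -> cnorm (k j w) <= C * normN N w).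

Lemma LA N : forall m col, indep N m col -> exists k C, leftinv N m col k C.
Proof.
  induction m; intros col Hind.
  - exists (fun _ _ => C0), 0. split; [|split;[|split]]; intros; try lia. lra.
  -
    destruct (classic (exists i0, (i0 < N)%nat /\ col m i0 <> C0)) as [[i0 [Hi0 Hc]] | Hno].
    2:{ exfalso. assert (H : (fun j => if Nat.eqb j m then Defs.C1 else C0) m = C0).
        { apply (Hind (fun j => if Nat.eqb j m then Defs.C1 else C0)); [|lia].
          intros i Hi. unfold vsum. simpl. rewrite sumC_zero.
          rewrite Nat.eqb_refl. destruct (classic (col m i = C0)). rewrite H; cx.
          exfalso; apply Hno; eauto.
          intros j Hj. destruct (Nat.eqb_spec j m). lia. cx. }
        simpl in H. rewrite Nat.eqb_refl in H.
        assert (H1 := f_equal Re H). simpl in H1. lra. }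
    set (c := col m i0).
    set (pi := fun w : CV => vsub w (vscale (Cmul (w i0) (Cinv c)) (col m))).
    set (col' := fun j => pi (col j)).
    assert (Hpi_add : forall u w, pi (vadd u w) = vadd (pi u) (pi w)).
    { intros; apply functional_extensionality; intros; unfold pi, vsub, vadd, vscale; cx. }
    assert (Hpi_sc : forall a u, pi (vscale a u) = vscale a (pi u)).
    { intros; apply functional_extensionality; intros; unfold pi, vsub, vadd, vscale; cx. }
    assert (Hpim : pi (col m) = fun _ => C0).
    { apply functional_extensionality; intros; unfold pi, vsub, vscale. fold c.
      rewrite (Cmul_comm c (Cinv c)), Cinv_l by auto. cx. }
    assert (Hind' : indep N m col').
    { intros a Ha j Hj.
      set (a' := fun l => if Nat.eqb l m then Copp (Cmul (sumC m (fun l => Cmul (a l) (col l i0))) (Cinv c)) else a l).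
      assert (a j = a' j). { unfold a'. destruct (Nat.eqb_spec j m); auto; lia. }
      rewrite H. apply Hind; auto. intros i Hi. unfold vsum. simpl.
      rewrite (sumC_ext m _ (fun l => Cmul (a l) (col l i))).
      2:{ intros; unfold a'; destruct (Nat.eqb_spec j0 m); auto; lia. }
      unfold a'; rewrite Nat.eqb_refl.
      specialize (Ha i Hi). unfold vsum, col', pi, vsub, vscale in Ha.
      assert (sumC m (fun l => Cmul (a l) (col l i)) =
        Cadd (sumC m (fun l => Cmul (a l) (Csub (col l i) (Cmul (Cmul (col l i0) (Cinv c)) (col m i)))))
             (Cmul (Cmul (sumC m (fun l => Cmul (a l) (col l i0))) (Cinv c)) (col m i))).
      { rewrite <- !sumC_scal_r, <- sumC_add. apply sumC_ext; intros; cx. }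
      rewrite H0, Ha. cx. }
    destruct (IHm col' Hind') as [k' [C' [Hlin [Hdel [HC' Hb]]]]].
    set (last := fun w : CV => Cmul (Cinv c) (Csub (w i0) (sumC m (fun l => Cmul (k' l (pi w)) (col l i0))))).
    exists (fun j w => if Nat.ltb j m then k' j (pi w) else last w).
    set (Cp := 1 + cnorm (Cinv c) * normN N (col m)).
    assert (Hpib : forall w, normN N (pi w) <= Cp * normN N w).
    { intros w. unfold pi. eapply Rle_trans.
      rewrite normN_eq. apply sumR_le. intros. unfold vsub. apply cnorm_sub.
      rewrite sumR_add. fold (normN N w). eapply Rle_trans. apply Rplus_le_compat_l. apply normN_scal.
      eapply Rle_trans. apply Rplus_le_compat_l. apply Rmult_le_compat_r. apply normN_ge0. apply cnorm_mul.
      unfold Cp. assert (cnorm (w i0) <= normN N w) by (apply normN_comp; auto).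
      pose proof (cnorm_ge0 (Cinv c)). pose proof (normN_ge0 N (col m)). pose proof (cnorm_ge0 (w i0)).
      assert (cnorm (w i0) * (cnorm (Cinv c) * normN N (col m)) <= normN N w * (cnorm (Cinv c) * normN N (col m))) by (apply Rmult_le_compat_r; nra).
      change (sumR N (fun j => cnorm (w j))) with (normN N w). nra. }
    set (S0 := sumR m (fun l => cnorm (col l i0))).
    set (Cl := cnorm (Cinv c) * (1 + C' * Cp * S0)).
    assert (HS0 : 0 <= S0) by apply sumR_cnorm_nonneg.
    assert (HCp : 0 <= Cp). { unfold Cp. pose proof (cnorm_ge0 (Cinv c)). pose proof (normN_ge0 N (col m)). nra. }
    exists (C' * Cp + Cl).
    assert (HCl : 0 <= Cl). { unfold Cl. pose proof (cnorm_ge0 (Cinv c)). pose proof (Rmult_le_pos _ _ HC' HCp). pose proof (Rmult_le_pos _ _ H0 HS0). apply Rmult_le_pos; lra. }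
    split; [|split;[|split]].
    + intros j Hj. destruct (Nat.ltb_spec j m).
      * destruct (Hlin j H) as [A B]. split; intros; [rewrite Hpi_add, A | rewrite Hpi_sc, B]; auto.
      * split; intros; unfold last.
        -- rewrite Hpi_add. rewrite (sumC_ext m _ (fun l => Cadd (Cmul (k' l (pi u)) (col l i0)) (Cmul (k' l (pi w)) (col l i0)))).
           rewrite sumC_add. unfold vadd at 1. cx.
           intros. destruct (Hlin j0 H0) as [A _]. rewrite A. cx.
        -- rewrite Hpi_sc. rewrite (sumC_ext m _ (fun l => Cmul a (Cmul (k' l (pi u)) (col l i0)))).
           rewrite sumC_scal. unfold vscale at 1. cx.
           intros. destruct (Hlin j0 H0) as [_ B]. rewrite B. cx.
    + intros j l Hj Hl. destruct (Nat.ltb_spec j m).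
      * destruct (Nat.eq_dec l m).
        -- subst. rewrite Hpim. rewrite (LinB_zero N _ (Hlin j H)). unfold delta. destruct (Nat.eqb_spec j m); auto; lia.
        -- apply Hdel; auto; lia.
      * assert (j = m) by lia. subst. unfold last. destruct (Nat.eq_dec l m).
        -- subst. rewrite Hpim. rewrite sumC_zero. unfold delta; rewrite Nat.eqb_refl. fold c.
           rewrite <- (Cinv_l c Hc). cx. auto.
           intros. rewrite (LinB_zero N _ (Hlin j H0)). cx.
        -- assert (Hl' : (l < m)%nat) by lia.
           rewrite (sumC_ext m _ (fun l0 => Cmul (col l i0) (delta l l0))).
           rewrite sumC_delta by auto. unfold delta. destruct (Nat.eqb_spec m l). lia. cx.
           intros. fold (col' l). rewrite Hdel by auto. unfold delta.
           destruct (Nat.eqb_spec j l); destruct (Nat.eqb_spec l j); subst; try lia; cx.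
    + pose proof (Rmult_le_pos _ _ HC' HCp). lra.
    + intros j w Hj. pose proof (normN_ge0 N w). destruct (Nat.ltb_spec j m).
      * eapply Rle_trans. apply Hb; auto. pose proof (Hpib w).
        assert (C' * normN N (pi w) <= C' * (Cp * normN N w)) by (apply Rmult_le_compat_l; auto).
        nra.
      * unfold last. eapply Rle_trans. apply cnorm_mul. apply Rle_trans with (cnorm (Cinv c) * (Cl / cnorm (Cinv c) * normN N w)).
        2:{ pose proof (Rmult_le_pos _ _ HC' HCp). destruct (Req_dec (cnorm (Cinv c)) 0). rewrite H2, Rmult_0_l. apply Rmult_le_pos; lra.
            assert (cnorm (Cinv c) * (Cl / cnorm (Cinv c) * normN N w) = Cl * normN N w) by (field; auto).
            rewrite H3. pose proof (Rmult_le_pos _ _ H1 H). nra. }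
        apply Rmult_le_compat_l. apply cnorm_ge0.
        eapply Rle_trans. apply cnorm_sub.
        destruct (Req_dec (cnorm (Cinv c)) 0).
        { exfalso. apply cnorm0 in H1. pose proof (Cinv_l c Hc). rewrite H1 in H2. rewrite Cmul_0_l in H2.
          assert (H3 := f_equal Re H2). simpl in H3. lra. }
        replace (Cl / cnorm (Cinv c)) with (1 + C' * Cp * S0) by (unfold Cl; field; auto).
        assert (cnorm (w i0) <= normN N w) by (apply normN_comp; auto).
        assert (cnorm (sumC m (fun l => Cmul (k' l (pi w)) (col l i0))) <= C' * Cp * S0 * normN N w).
        { eapply Rle_trans. apply cnorm_sum. unfold S0. rewrite (Rmult_comm _ (normN N w)). rewrite <- !sumR_scal.
          apply sumR_le. intros. eapply Rle_trans. apply cnorm_mul.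
          assert (cnorm (k' j0 (pi w)) <= C' * Cp * normN N w).
          { eapply Rle_trans. apply Hb; auto. pose proof (Hpib w).
            assert (C' * normN N (pi w) <= C' * (Cp * normN N w)) by (apply Rmult_le_compat_l; auto). nra. }
          pose proof (cnorm_ge0 (col j0 i0)). nra. }
        nra.
Qed.

Definition sd (g : R -> Cx) (z : Cx) : Prop :=
  derivable_pt_lim (fun t => Re (g t)) 0 (Re z) /\ derivable_pt_lim (fun t => Im (g t)) 0 (Im z).

Definition sdo (g : R -> Cx) (z : Cx) : Prop :=
  forall eps, eps > 0 -> exists del, del > 0 /\ forall t, Rabs t < del ->
    cnorm (Csub (Csub (g t) (g 0)) (Cmul (RtoC t) z)) <= eps * Rabs t.

Lemma dpl_o f l : derivable_pt_lim f 0 l -> forall eps, eps > 0 -> exists del, del > 0 /\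
  forall t, Rabs t < del -> Rabs (f t - f 0 - t * l) <= eps * Rabs t.
Proof. intros H eps He. destruct (H eps He) as [d Hd]. exists d; split. apply cond_pos.
  intros t Ht. destruct (Req_dec t 0). subst. rewrite Rabs_R0. replace (f 0 - f 0 - 0 * l) with 0 by ring. rewrite Rabs_R0; lra.
  specialize (Hd t H0 Ht). replace (0 + t) with t in Hd by ring.
  replace (f t - f 0 - t * l) with (t * ((f t - f 0) / t - l)) by (field; auto).
  rewrite Rabs_mult. rewrite Rmult_comm. apply Rmult_le_compat_r. apply Rabs_pos. lra. Qed.

Lemma o_dpl f l : (forall eps, eps > 0 -> exists del, del > 0 /\
  forall t, Rabs t < del -> Rabs (f t - f 0 - t * l) <= eps * Rabs t) -> derivable_pt_lim f 0 l.
Proof. intros H eps He. destruct (H (eps/2) ltac:(lra)) as [d [Hd Ht]]. exists (mkposreal d Hd).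
  intros h Hh0 Hh. simpl in Hh. specialize (Ht h Hh). replace (0 + h) with h by ring.
  replace ((f h - f 0) / h - l) with ((f h - f 0 - h * l) / h) by (field; auto).
  unfold Rdiv. rewrite Rabs_mult, Rabs_inv. pose proof (Rabs_pos_lt h Hh0).
  apply Rle_lt_trans with (eps / 2 * Rabs h * / Rabs h). apply Rmult_le_compat_r.
  left; apply Rinv_0_lt_compat; auto. auto. field_simplify; lra. Qed.

Lemma sd_sdo g z : sd g z -> sdo g z.
Proof. intros [H1 H2] eps He. destruct (dpl_o _ _ H1 (eps/2) ltac:(lra)) as [d1 [Hd1 A]].
  destruct (dpl_o _ _ H2 (eps/2) ltac:(lra)) as [d2 [Hd2 B]].
  exists (Rmin d1 d2); split. apply Rmin_pos; auto. intros t Ht.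
  specialize (A t ltac:(pose proof (Rmin_l d1 d2); lra)). specialize (B t ltac:(pose proof (Rmin_r d1 d2); lra)).
  unfold cnorm; simpl. replace (Re (g t) + - Re (g 0) + - (t * Re z - 0 * Im z)) with (Re (g t) - Re (g 0) - t * Re z) by ring.
  replace (Im (g t) + - Im (g 0) + - (t * Im z + 0 * Re z)) with (Im (g t) - Im (g 0) - t * Im z) by ring. lra. Qed.

Lemma sdo_sd g z : sdo g z -> sd g z.
Proof. intros H; split; apply o_dpl; intros eps He; destruct (H eps He) as [d [Hd A]]; exists d; split; auto;
  intros t Ht; specialize (A t Ht); eapply Rle_trans; try apply A.
  - eapply Rle_trans; [|apply cnorm_Re]. simpl. right. f_equal. ring.
  - eapply Rle_trans; [|apply cnorm_Im]. simpl. right. f_equal. ring. Qed.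

Lemma sd_unique g z1 z2 : sd g z1 -> sd g z2 -> z1 = z2.
Proof. intros [A B] [C D]. apply Cx_ext; eapply uniqueness_limite; eauto. Qed.

Lemma sdo_lip g z : sdo g z -> exists del, del > 0 /\ forall t, Rabs t < del ->
  cnorm (Csub (g t) (g 0)) <= (cnorm z + 1) * Rabs t.
Proof. intros H. destruct (H 1 ltac:(lra)) as [d [Hd A]]. exists d; split; auto. intros t Ht.
  specialize (A t Ht). replace (Csub (g t) (g 0)) with (Cadd (Csub (Csub (g t) (g 0)) (Cmul (RtoC t) z)) (Cmul (RtoC t) z)) by cx.
  eapply Rle_trans. apply cnorm_add. pose proof (cnorm_mul (RtoC t) z). rewrite cnorm_RtoC in H0. nra. Qed.

Definition fR (h : R -> R) := h.

Lemma sd_add g h a b : sd g a -> sd h b -> sd (fun t => Cadd (g t) (h t)) (Cadd a b).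
Proof. intros [A B] [C D]; split; simpl.
  apply (derivable_pt_lim_plus (fun t => Re (g t)) (fun t => Re (h t))); auto.
  apply (derivable_pt_lim_plus (fun t => Im (g t)) (fun t => Im (h t))); auto. Qed.

Lemma sd_opp g a : sd g a -> sd (fun t => Copp (g t)) (Copp a).
Proof. intros [A B]; split; simpl.
  apply (derivable_pt_lim_opp (fun t => Re (g t))); auto.
  apply (derivable_pt_lim_opp (fun t => Im (g t))); auto. Qed.

Lemma sd_sub g h a b : sd g a -> sd h b -> sd (fun t => Csub (g t) (h t)) (Csub a b).
Proof. intros. apply sd_add; auto. apply sd_opp; auto. Qed.

Lemma sd_const c : sd (fun _ => c) C0.
Proof. split; simpl; apply (derivable_pt_lim_const). Qed.

Lemma sd_mul g h a b : sd g a -> sd h b -> sd (fun t => Cmul (g t) (h t)) (Cadd (Cmul a (h 0)) (Cmul (g 0) b)).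
Proof. intros [A B] [C D]; split; simpl.
  - pose proof (derivable_pt_lim_mult _ _ _ _ _ A C). pose proof (derivable_pt_lim_mult _ _ _ _ _ B D).
    pose proof (derivable_pt_lim_minus _ _ _ _ _ H H0). unfold minus_fct, mult_fct in H1.
    replace (Re a * Re (h 0) - Im a * Im (h 0) + (Re (g 0) * Re b - Im (g 0) * Im b)) with
      (Re a * Re (h 0) + Re (g 0) * Re b - (Im a * Im (h 0) + Im (g 0) * Im b)) by ring. exact H1.
  - pose proof (derivable_pt_lim_mult _ _ _ _ _ A D). pose proof (derivable_pt_lim_mult _ _ _ _ _ B C).
    pose proof (derivable_pt_lim_plus _ _ _ _ _ H H0). unfold plus_fct, mult_fct in H1.
    replace (Re a * Im (h 0) + Im a * Re (h 0) + (Re (g 0) * Im b + Im (g 0) * Re b)) with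
      (Re a * Im (h 0) + Re (g 0) * Im b + (Im a * Re (h 0) + Im (g 0) * Re b)) by ring. exact H1. Qed.

Lemma sd_scal c g a : sd g a -> sd (fun t => Cmul c (g t)) (Cmul c a).
Proof. intros H. pose proof (sd_mul _ _ _ _ (sd_const c) H). simpl in H0.
  replace (Cmul c a) with (Cadd (Cmul C0 (g 0)) (Cmul c a)) by cx. auto. Qed.

Lemma sd_lin a : sd (fun t => Cmul (RtoC t) a) a.
Proof. apply sdo_sd. intros eps He. exists 1; split; [lra|]. intros t _.
  replace (Csub (Csub (Cmul (RtoC t) a) (Cmul (RtoC 0) a)) (Cmul (RtoC t) a)) with C0 by cx.
  rewrite cnorm_C0. pose proof (Rabs_pos t). nra. Qed.

Lemma sd_conj g a : sd g a -> sd (fun t => Cconj (g t)) (Cconj a).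
Proof. intros [A B]; split; simpl; auto. apply (derivable_pt_lim_opp (fun t => Im (g t))); auto. Qed.

Lemma sd_inv g a : sd g a -> g 0 <> C0 -> sd (fun t => Cinv (g t)) (Copp (Cmul a (Cmul (Cinv (g 0)) (Cinv (g 0))))).
Proof. intros [A B] Hg. pose proof (C0_iff _ Hg) as Hn.
  assert (Hq : derivable_pt_lim (fun t => Re (g t) * Re (g t) + Im (g t) * Im (g t)) 0
     (Re a * Re (g 0) + Re (g 0) * Re a + (Im a * Im (g 0) + Im (g 0) * Im a))).
  { apply (derivable_pt_lim_plus (fun t => Re (g t) * Re (g t)) (fun t => Im (g t) * Im (g t)));
    apply (derivable_pt_lim_mult (fun t => Re (g t)) (fun t => Re (g t))) || apply (derivable_pt_lim_mult (fun t => Im (g t)) (fun t => Im (g t))); auto. }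
  split; unfold Cinv; simpl.
  - pose proof (derivable_pt_lim_div _ _ _ _ _ A Hq Hn). unfold div_fct in H.
    match goal with |- derivable_pt_lim _ 0 ?l => replace l with
      ((Re a * (Re (g 0) * Re (g 0) + Im (g 0) * Im (g 0)) -
        (Re a * Re (g 0) + Re (g 0) * Re a + (Im a * Im (g 0) + Im (g 0) * Im a)) * Re (g 0)) /
       (Re (g 0) * Re (g 0) + Im (g 0) * Im (g 0))²) end. exact H.
    unfold Rsqr. field; auto.
  - pose proof (derivable_pt_lim_opp _ _ _ B).
    pose proof (derivable_pt_lim_div _ _ _ _ _ H Hq Hn). unfold div_fct, opp_fct in H0.
    match goal with |- derivable_pt_lim _ 0 ?l => replace l with
      ((- Im a * (Re (g 0) * Re (g 0) + Im (g 0) * Im (g 0)) -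
        (Re a * Re (g 0) + Re (g 0) * Re a + (Im a * Im (g 0) + Im (g 0) * Im a)) * - Im (g 0)) /
       (Re (g 0) * Re (g 0) + Im (g 0) * Im (g 0))²) end. exact H0.
    unfold Rsqr. field; auto. Qed.

Lemma sd_ext g h a : (forall t, g t = h t) -> sd g a -> sd h a.
Proof. intros E H. replace h with g; auto. apply functional_extensionality; auto. Qed.

Lemma dpl_loc f g l r : r > 0 -> (forall t, Rabs t < r -> f t = g t) -> derivable_pt_lim f 0 l -> derivable_pt_lim g 0 l.
Proof. intros Hr E H eps He. destruct (H eps He) as [d Hd].
  assert (Hm : 0 < Rmin d r) by (apply Rmin_pos; [apply cond_pos|auto]).
  exists (mkposreal _ Hm). intros h Hh0 Hh. simpl in Hh.
  pose proof (Rmin_l d r). pose proof (Rmin_r d r).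
  rewrite <- !E. apply Hd; auto; lra. rewrite Rabs_R0; lra. replace (0 + h) with h by ring; lra. Qed.

Lemma sd_loc g h a r : r > 0 -> (forall t, Rabs t < r -> g t = h t) -> sd g a -> sd h a.
Proof. intros Hr E [A B]; split; eapply dpl_loc; eauto; intros; simpl; rewrite E; auto. Qed.

Definition vd (c : R -> CV) (v : CV) : Prop := forall i, sd (fun t => c t i) (v i).

Lemma curve_vd S p v c eps : curve_in S p v c eps -> vd c v.
Proof. intros [_ [_ [_ H]]] i. apply H. Qed.

Lemma vd_normN N c v : vd c v -> forall eps, eps > 0 -> exists del, del > 0 /\ forall t, Rabs t < del ->
  normN N (vsub (vsub (c t) (c 0)) (vscale (RtoC t) v)) <= eps * Rabs t.
Proof. intros H. induction N; intros eps He.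
  - exists 1; split; [lra|]. intros; simpl. unfold normN; simpl. pose proof (Rabs_pos t); nra.
  - destruct (IHN (eps/2) ltac:(lra)) as [d1 [Hd1 A]].
    destruct (sd_sdo _ _ (H N) (eps/2) ltac:(lra)) as [d2 [Hd2 B]].
    exists (Rmin d1 d2); split. apply Rmin_pos; auto. intros t Ht.
    specialize (A t ltac:(pose proof (Rmin_l d1 d2); lra)). specialize (B t ltac:(pose proof (Rmin_r d1 d2); lra)).
    rewrite normN_eq in *. change (sumR (S N) ?F) with (sumR N F + F N). unfold vsub, vscale in *. lra. Qed.

Lemma vd_lip N c v : vd c v -> exists del, del > 0 /\ forall t, Rabs t < del ->
  normN N (vsub (c t) (c 0)) <= (normN N v + 1) * Rabs t.
Proof. intros H. destruct (vd_normN N c v H 1 ltac:(lra)) as [d [Hd A]]. exists d; split; auto.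
  intros t Ht. specialize (A t Ht).
  pose proof (normN_triang N (vsub (vsub (c t) (c 0)) (vscale (RtoC t) v)) (vscale (RtoC t) v)).
  assert (vadd (vsub (vsub (c t) (c 0)) (vscale (RtoC t) v)) (vscale (RtoC t) v) = vsub (c t) (c 0)).
  { apply functional_extensionality; intros; unfold vadd, vsub, vscale; cx. }
  rewrite H1 in H0. pose proof (normN_scal N (RtoC t) v). rewrite cnorm_RtoC in H2. nra. Qed.

Lemma mvt_bound (phi phi' : R -> R) s K e :
  (forall t, Rmin 0 s <= t <= Rmax 0 s -> derivable_pt_lim phi t (phi' t) /\ Rabs (phi' t - K) <= e) ->
  Rabs (phi s - phi 0 - s * K) <= e * Rabs s.
Proof. intros H. destruct (Rtotal_order s 0) as [Hs|[Hs|Hs]].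
  - destruct (MVT_cor2 phi phi' s 0 Hs) as [c [E Hc]].
    { intros c Hc. apply H. rewrite Rmin_right, Rmax_left by lra. lra. }
    destruct (H c) as [_ Hb]. rewrite Rmin_right, Rmax_left by lra. lra.
    replace (phi s - phi 0 - s * K) with (- (phi 0 - phi s) - s * K) by ring. rewrite E.
    replace (- (phi' c * (0 - s)) - s * K) with ((phi' c - K) * s) by ring.
    rewrite Rabs_mult. apply Rmult_le_compat_r. apply Rabs_pos. auto.
  - subst. replace (phi 0 - phi 0 - 0 * K) with 0 by ring. rewrite Rabs_R0. lra.
  - destruct (MVT_cor2 phi phi' 0 s Hs) as [c [E Hc]].
    { intros c Hc. apply H. rewrite Rmin_left, Rmax_right by lra. lra. }
    destruct (H c) as [_ Hb]. rewrite Rmin_left, Rmax_right by lra. lra.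
    rewrite E. replace (phi' c * (s - 0) - s * K) with ((phi' c - K) * s) by ring.
    rewrite Rabs_mult. apply Rmult_le_compat_r. apply Rabs_pos. auto. Qed.

Lemma dpl_shift f t l : derivable_pt_lim (fun h => f (t + h)) 0 l -> derivable_pt_lim f t l.
Proof. intros H eps He. destruct (H eps He) as [d Hd]. exists d. intros h Hh0 Hh.
  specialize (Hd h Hh0 Hh). replace (0 + h) with h in Hd by ring. replace (t + 0) with t in Hd by ring. auto. Qed.

Lemma dderiv_shift (g : CV -> Cx) y e t d :
  dderiv g (vadd y (vscale (RtoC t) e)) e d ->
  derivable_pt_lim (fun s => Re (g (vadd y (vscale (RtoC s) e)))) t (Re d) /\
  derivable_pt_lim (fun s => Im (g (vadd y (vscale (RtoC s) e)))) t (Im d).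
Proof. intros [A B].
  assert (E : forall h, vadd (vadd y (vscale (RtoC t) e)) (vscale (RtoC h) e) = vadd y (vscale (RtoC (t + h)) e)).
  { intros; apply functional_extensionality; intros; unfold vadd, vscale; cx. }
  split; apply dpl_shift.
  - apply (dpl_loc (fun h => Re (g (vadd (vadd y (vscale (RtoC t) e)) (vscale (RtoC h) e)))) _ _ 1). lra.
    intros; simpl; rewrite E; reflexivity. exact A.
  - apply (dpl_loc (fun h => Im (g (vadd (vadd y (vscale (RtoC t) e)) (vscale (RtoC h) e)))) _ _ 1). lra.
    intros; simpl; rewrite E; reflexivity. exact B. Qed.

Lemma seg_bound (g : CV -> Cx) y e s (Dz : CV -> Cx) Dx e' :
  (forall t, Rmin 0 s <= t <= Rmax 0 s ->
     dderiv g (vadd y (vscale (RtoC t) e)) e (Dz (vadd y (vscale (RtoC t) e))) /\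
     cnorm (Csub (Dz (vadd y (vscale (RtoC t) e))) Dx) <= e') ->
  cnorm (Csub (Csub (g (vadd y (vscale (RtoC s) e))) (g y)) (Cmul (RtoC s) Dx)) <= 2 * e' * Rabs s.
Proof. intros H.
  assert (Ey : vadd y (vscale (RtoC 0) e) = y).
  { apply functional_extensionality; intros; unfold vadd, vscale. destruct (y x); cx. }
  assert (A : Rabs (Re (g (vadd y (vscale (RtoC s) e))) - Re (g (vadd y (vscale (RtoC 0) e))) - s * Re Dx) <= e' * Rabs s).
  { apply (mvt_bound (fun t => Re (g (vadd y (vscale (RtoC t) e)))) (fun t => Re (Dz (vadd y (vscale (RtoC t) e))))).
    intros t Ht. destruct (H t Ht) as [Hd Hb]. split. apply (dderiv_shift g y e t _ Hd).
    eapply Rle_trans; [|apply Hb]. eapply Rle_trans; [|apply cnorm_Re]. simpl. right. f_equal; ring. }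
  assert (B : Rabs (Im (g (vadd y (vscale (RtoC s) e))) - Im (g (vadd y (vscale (RtoC 0) e))) - s * Im Dx) <= e' * Rabs s).
  { apply (mvt_bound (fun t => Im (g (vadd y (vscale (RtoC t) e)))) (fun t => Im (Dz (vadd y (vscale (RtoC t) e))))).
    intros t Ht. destruct (H t Ht) as [Hd Hb]. split. apply (dderiv_shift g y e t _ Hd).
    eapply Rle_trans; [|apply Hb]. eapply Rle_trans; [|apply cnorm_Im]. simpl. right. f_equal; ring. }
  rewrite Ey in A, B. unfold cnorm. simpl.
  replace (Re (g (vadd y (vscale (RtoC s) e))) + - Re (g y) + - (s * Re Dx - 0 * Im Dx)) with
    (Re (g (vadd y (vscale (RtoC s) e))) - Re (g y) - s * Re Dx) by ring.
  replace (Im (g (vadd y (vscale (RtoC s) e))) + - Im (g y) + - (s * Im Dx + 0 * Re Dx)) with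
    (Im (g (vadd y (vscale (RtoC s) e))) - Im (g y) - s * Im Dx) by ring. lra. Qed.

Definition trunc (h : CV) (k : nat) : CV := fun j => if Nat.ltb j k then h j else C0.

Lemma cnorm_mkC a b : cnorm (mkC a b) = Rabs a + Rabs b.
Proof. reflexivity. Qed.

Lemma pt1 x h k t j :
  Csub (vadd (vadd x (trunc h k)) (vscale (RtoC t) (ebasis k)) j) (x j) =
  if Nat.ltb j k then h j else if Nat.eqb j k then RtoC t else C0.
Proof. unfold vadd, vscale, trunc, ebasis.
  destruct (Nat.ltb_spec j k); destruct (Nat.eqb_spec j k); try lia; cx. Qed.

Lemma pt2 x h k t j :
  Csub (vadd (vadd (vadd x (trunc h k)) (vscale (RtoC (Re (h k))) (ebasis k))) (vscale (RtoC t) (vscale Ci (ebasis k))) j) (x j) =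
  if Nat.ltb j k then h j else if Nat.eqb j k then mkC (Re (h k)) t else C0.
Proof. unfold vadd, vscale, trunc, ebasis.
  destruct (Nat.ltb_spec j k); destruct (Nat.eqb_spec j k); try lia; cx. Qed.

Lemma path_step x h k :
  vadd x (trunc h (S k)) =
  vadd (vadd (vadd x (trunc h k)) (vscale (RtoC (Re (h k))) (ebasis k))) (vscale (RtoC (Im (h k))) (vscale Ci (ebasis k))).
Proof. apply functional_extensionality; intros j. unfold vadd, vscale, trunc, ebasis.
  destruct (Nat.ltb_spec j (S k)); destruct (Nat.ltb_spec j k); destruct (Nat.eqb_spec j k); try lia; subst;
  try (destruct (h k); cx); cx. Qed.

Lemma trunc0 x h : vadd x (trunc h 0) = x.
Proof. apply functional_extensionality; intros j. unfold vadd, trunc. simpl. destruct (x j); cx. Qed.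

Lemma Rmin_max_abs s t : Rmin 0 s <= t <= Rmax 0 s -> Rabs t <= Rabs s.
Proof. intros [A B]. unfold Rmin, Rmax in *. destruct (Rle_dec 0 s).
  rewrite !Rabs_right by lra; lra. rewrite !Rabs_left1 by lra; lra. Qed.

Lemma frechet_scalar n (G : CV -> Cx) (dG : nat -> CV -> Cx) x h e' :
  (forall z, (forall j, (j < n)%nat -> cnorm (Csub (z j) (x j)) <= cnorm (h j)) ->
             (forall j, (n <= j)%nat -> z j = x j) -> forall k, (k < n)%nat ->
      dderiv G z (ebasis k) (dG k z) /\ dderiv G z (vscale Ci (ebasis k)) (Cmul Ci (dG k z)) /\
      cnorm (Csub (dG k z) (dG k x)) <= e') ->
  (forall j, (n <= j)%nat -> h j = C0) ->
  forall k, (k <= n)%nat ->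
  cnorm (Csub (Csub (G (vadd x (trunc h k))) (G x)) (sumC k (fun j => Cmul (h j) (dG j x))))
    <= 2 * e' * sumR k (fun j => cnorm (h j)).
Proof. intros Hgood Hh. induction k; intros Hk.
  - simpl. rewrite trunc0. replace (Csub (Csub (G x) (G x)) C0) with C0 by cx. rewrite cnorm_C0. lra.
  - specialize (IHk ltac:(lia)). rewrite path_step.
    set (y := vadd x (trunc h k)) in *.
    set (y1 := vadd y (vscale (RtoC (Re (h k))) (ebasis k))).
    assert (S1 : cnorm (Csub (Csub (G y1) (G y)) (Cmul (RtoC (Re (h k))) (dG k x))) <= 2 * e' * Rabs (Re (h k))).
    { apply (seg_bound G y (ebasis k) (Re (h k)) (dG k) (dG k x) e'). intros t Ht.
      destruct (Hgood (vadd y (vscale (RtoC t) (ebasis k)))) with (k := k) as [A [_ C]]; auto; try lia.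
      - intros j Hj. unfold y. rewrite pt1. destruct (Nat.ltb_spec j k). lra.
        destruct (Nat.eqb_spec j k). subst. rewrite cnorm_RtoC. pose proof (Rmin_max_abs _ _ Ht).
        pose proof (cnorm_Re (h k)). lra. rewrite cnorm_C0. apply cnorm_ge0.
      - intros j Hj. unfold y, vadd, vscale, trunc, ebasis. destruct (Nat.ltb_spec j k); destruct (Nat.eqb_spec j k); try lia. destruct (x j); cx. }
    assert (S2 : cnorm (Csub (Csub (G (vadd y1 (vscale (RtoC (Im (h k))) (vscale Ci (ebasis k))))) (G y1)) (Cmul (RtoC (Im (h k))) (Cmul Ci (dG k x)))) <= 2 * e' * Rabs (Im (h k))).
    { apply (seg_bound G y1 (vscale Ci (ebasis k)) (Im (h k)) (fun z => Cmul Ci (dG k z)) (Cmul Ci (dG k x)) e'). intros t Ht.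
      destruct (Hgood (vadd y1 (vscale (RtoC t) (vscale Ci (ebasis k))))) with (k := k) as [_ [B C]]; auto; try lia.
      - intros j Hj. unfold y1, y. rewrite pt2. destruct (Nat.ltb_spec j k). lra.
        destruct (Nat.eqb_spec j k). subst. rewrite cnorm_mkC. pose proof (Rmin_max_abs _ _ Ht).
        unfold cnorm. lra. rewrite cnorm_C0. apply cnorm_ge0.
      - intros j Hj. unfold y1, y, vadd, vscale, trunc, ebasis. destruct (Nat.ltb_spec j k); destruct (Nat.eqb_spec j k); try lia. destruct (x j); cx.
      - split; auto. replace (Csub (Cmul Ci (dG k (vadd y1 (vscale (RtoC t) (vscale Ci (ebasis k)))))) (Cmul Ci (dG k x)))
           with (Cmul Ci (Csub (dG k (vadd y1 (vscale (RtoC t) (vscale Ci (ebasis k))))) (dG k x))) by cx.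
        eapply Rle_trans. apply cnorm_mul. unfold cnorm at 1. simpl. rewrite Rabs_R0, Rabs_R1. lra. }
    set (z2 := vadd y1 (vscale (RtoC (Im (h k))) (vscale Ci (ebasis k)))) in *.
    replace (Csub (Csub (G z2) (G x)) (sumC (S k) (fun j => Cmul (h j) (dG j x)))) with
      (Cadd (Cadd (Csub (Csub (G z2) (G y1)) (Cmul (RtoC (Im (h k))) (Cmul Ci (dG k x))))
                  (Csub (Csub (G y1) (G y)) (Cmul (RtoC (Re (h k))) (dG k x))))
            (Csub (Csub (G y) (G x)) (sumC k (fun j => Cmul (h j) (dG j x))))).
    2:{ simpl. destruct (h k). cx. }
    eapply Rle_trans. apply cnorm_add. eapply Rle_trans. apply Rplus_le_compat_r. apply cnorm_add.
    change (sumR (S k) ?F) with (sumR k F + F k). assert (cnorm (h k) = Rabs (Re (h k)) + Rabs (Im (h k))) by reflexivity. nra. Qed.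

Lemma finite_delta m (P : nat -> R -> Prop) :
  (forall j, (j < m)%nat -> exists d, d > 0 /\ P j d) ->
  (forall j d d', P j d -> 0 < d' <= d -> P j d') ->
  exists d, d > 0 /\ forall j, (j < m)%nat -> P j d.
Proof. intros H Hm. induction m.
  - exists 1; split; [lra|]; intros; lia.
  - destruct IHm as [d1 [Hd1 A]]. intros; apply H; lia.
    destruct (H m ltac:(lia)) as [d2 [Hd2 B]].
    exists (Rmin d1 d2); split. apply Rmin_pos; auto. intros j Hj.
    pose proof (Rmin_l d1 d2); pose proof (Rmin_r d1 d2); pose proof (Rmin_pos _ _ Hd1 Hd2).
    destruct (Nat.eq_dec j m). subst. apply (Hm m d2); auto; lra. apply (Hm j d1); auto. apply A; lia. Qed.

Lemma trunc_full h n : supp n h -> trunc h n = h.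
Proof. intros H; apply functional_extensionality; intros j; unfold trunc.
  destruct (Nat.ltb_spec j n); auto. rewrite H; auto. Qed.

Lemma normN_le_comp n u w : (forall j, (j < n)%nat -> cnorm (u j) <= cnorm (w j)) -> normN n u <= normN n w.
Proof. intros; rewrite !normN_eq; apply sumR_le; auto. Qed.

Lemma frechet n N g D dg : is_open n D -> holo_map n N g D dg -> forall x, D x ->
  forall eps, eps > 0 -> exists del, del > 0 /\ forall h, supp n h -> normN n h < del ->
    D (vadd x h) /\
    normN N (vsub (vsub (g (vadd x h)) (g x)) (vsum n h (fun j => dg j x))) <= eps * normN n h.
Proof. intros Hop Hh x Dx eps He.
  destruct (Hop x Dx) as [Sx [r [Hr Hball]]].
  set (e' := eps / (2 * INR N + 1)).
  assert (He' : e' > 0). { unfold e'. pose proof (pos_INR N). apply Rdiv_lt_0_compat; lra. }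
  destruct (finite_delta n (fun j d => forall y, D y -> normN n (vsub y x) < d -> normN N (vsub (dg j y) (dg j x)) < e')) as [dc [Hdc Hc]].
  { intros j Hj. destruct (Hh x Dx j Hj) as [_ [_ C]]. destruct (C e' He') as [d [Hd Cd]]. exists d; split; auto. }
  { intros j d d' A B y Dy Hy. apply A; auto; lra. }
  exists (Rmin r dc); split. apply Rmin_pos; auto. intros h Sh Hn.
  pose proof (Rmin_l r dc); pose proof (Rmin_r r dc).
  assert (Hgood : forall z, (forall j, (j < n)%nat -> cnorm (Csub (z j) (x j)) <= cnorm (h j)) ->
             (forall j, (n <= j)%nat -> z j = x j) -> D z /\ normN n (vsub z x) < Rmin r dc).
  { intros z A B. assert (normN n (vsub z x) <= normN n h) by (apply normN_le_comp; auto).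
    split; [|lra]. apply Hball. intros j Hj. rewrite B; auto. lra. }
  split.
  - apply Hgood. intros j Hj. unfold vadd. replace (Csub (Cadd (x j) (h j)) (x j)) with (h j) by (destruct (h j); cx). lra.
    intros j Hj. unfold vadd. rewrite Sh; auto. destruct (x j); cx.
  - rewrite normN_eq. apply Rle_trans with (sumR N (fun i => 2 * e' * normN n h)).
    + apply sumR_le. intros i Hi. unfold vsub at 1, vsum.
      rewrite <- (trunc_full h n Sh) at 1.
      rewrite normN_eq. apply (frechet_scalar n (fun y => g y i) (fun j y => dg j y i) x h e'); auto.
      intros z A B k Hk. destruct (Hgood z A B) as [Dz Hz]. destruct (Hh z Dz k Hk) as [P [Q _]].
      split; [apply P|split; [apply Q|]].
      left. apply Rle_lt_trans with (normN N (vsub (dg k z) (dg k x))). apply (normN_comp N (vsub (dg k z) (dg k x)) i Hi).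
      apply Hc; auto. lra.
    + rewrite sumR_const. unfold e'. pose proof (pos_INR N). pose proof (normN_ge0 n h).
      replace (INR N * (2 * (eps / (2 * INR N + 1)) * normN n h)) with ((2 * INR N / (2 * INR N + 1)) * (eps * normN n h)) by (field; lra).
      assert (2 * INR N / (2 * INR N + 1) <= 1). { apply Rmult_le_reg_r with (2 * INR N + 1). lra. field_simplify; lra. }
      pose proof (Rmult_le_pos _ _ (Rlt_le _ _ He) H2). nra. Qed.

Lemma sd_zero g z r : r > 0 -> (forall t, Rabs t < r -> g t = C0) -> sd g z -> z = C0.
Proof. intros Hr E H. apply (sd_unique g); auto. apply (sd_loc (fun _ => C0) g C0 r); auto.
  intros; rewrite E; auto. apply sd_const. Qed.

Lemma tangent_supp (S : CV -> Prop) N p v : (forall y, S y -> supp N y) -> tangent S p v -> supp N v.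
Proof. intros HS [c [eps [He [_ [Hin Hd]]]]] i Hi. apply (sd_zero (fun t => c t i) _ eps); auto.
  intros t Ht. apply (HS _ (Hin t Ht)); auto. apply Hd. Qed.

Lemma sumR_delta n j a : (j < n)%nat -> sumR n (fun i => if Nat.eqb i j then a else 0) = a.
Proof. induction n; intros; simpl. lia. destruct (Nat.eqb_spec n j).
  subst. rewrite (sumR_ext j _ (fun _ => 0)). rewrite sumR_const. ring.
  intros. destruct (Nat.eqb_spec j0 j); auto; lia.
  rewrite IHn by lia. ring. Qed.

Lemma normN_ebasis n j t : (j < n)%nat -> normN n (vscale (RtoC t) (ebasis j)) = Rabs t.
Proof. intros Hj. rewrite normN_eq. rewrite <- (sumR_delta n j (Rabs t)) by auto. apply sumR_ext.
  intros i Hi. unfold vscale, ebasis. destruct (Nat.eqb_spec i j); unfold cnorm; simpl.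
  replace (t * 1 - 0 * 0) with t by ring. replace (t * 0 + 0 * 1) with 0 by ring. rewrite Rabs_R0; ring.
  replace (t * 0 - 0 * 0) with 0 by ring. replace (t * 0 + 0 * 0) with 0 by ring. rewrite Rabs_R0; ring. Qed.

Lemma dphi_supp n N (S : CV -> Prop) phi D dphi x j i :
  is_open n D -> holo_map n N phi D dphi -> (forall y, S y -> supp N y) -> (forall x, D x -> S (phi x)) ->
  D x -> (j < n)%nat -> (N <= i)%nat -> dphi j x i = C0.
Proof. intros Hop Hh HS HD Dx Hj Hi. destruct (Hh x Dx j Hj) as [A _].
  destruct (Hop x Dx) as [Sx [r [Hr B]]].
  apply (sd_zero (fun t => phi (vadd x (vscale (RtoC t) (ebasis j))) i) _ r); auto. 2: apply (A i).
  intros t Ht. assert (Dy : D (vadd x (vscale (RtoC t) (ebasis j)))). 2: apply (HS _ (HD _ Dy)); auto.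
  apply B.
  - intros k Hk. unfold vadd, vscale, ebasis. rewrite Sx by auto. destruct (Nat.eqb_spec k j). lia. cx.
  - replace (vsub (vadd x (vscale (RtoC t) (ebasis j))) x) with (vscale (RtoC t) (ebasis j)).
    rewrite normN_ebasis; auto. apply functional_extensionality; intros; unfold vsub, vadd, vscale; cx. Qed.

Lemma LinB_sub N k u w : LinB N k -> k (vsub u w) = Csub (k u) (k w).
Proof. intros [A B]. replace (vsub u w) with (vadd u (vscale (Copp Defs.C1) w)).
  rewrite A, B. cx. apply functional_extensionality; intros; unfold vsub, vadd, vscale; cx. Qed.

Definition kv (n : nat) (k : nat -> CV -> Cx) (w : CV) : CV := fun j => if Nat.ltb j n then k j w else C0.

Lemma kv_supp n k w : supp n (kv n k w).
Proof. intros j Hj. unfold kv. destruct (Nat.ltb_spec j n); auto; lia. Qed.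

Lemma normN_vsum N n a col : normN N (vsum n a col) <= sumR n (fun j => normN N (col j)) * normN n a.
Proof. rewrite normN_eq. unfold vsum.
  apply Rle_trans with (sumR N (fun i => sumR n (fun j => cnorm (a j) * cnorm (col j i)))).
  apply sumR_le; intros. eapply Rle_trans. apply cnorm_sum. apply sumR_le; intros; apply cnorm_mul.
  rewrite sumR_swap. rewrite (normN_eq n a). rewrite Rmult_comm. rewrite <- sumR_scal.
  apply sumR_le. intros j Hj. rewrite sumR_scal. fold (normN N (col j)).
  apply Rmult_le_compat_r. apply normN_ge0. apply (sumR_term n (fun j => cnorm (a j))); auto. intros; apply cnorm_ge0. Qed.

Lemma normN_kv N n k C w : (forall j w, (j < n)%nat -> cnorm (k j w) <= C * normN N w) ->
  normN n (kv n k w) <= INR n * C * normN N w.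
Proof. intros H. rewrite normN_eq. rewrite Rmult_assoc, <- sumR_const. apply sumR_le. intros j Hj.
  unfold kv. destruct (Nat.ltb_spec j n); try lia. auto. Qed.

Lemma vsum_ext n a b col : (forall j, (j < n)%nat -> a j = b j) -> vsum n a col = vsum n b col.
Proof. intros H; apply functional_extensionality; intros i; unfold vsum; apply sumC_ext; intros; rewrite H; auto. Qed.

Lemma kv_vsum N n col k C h : leftinv N n col k C -> supp n h -> kv n k (vsum n h col) = h.
Proof. intros [Hl [Hd _]] Sh. apply functional_extensionality; intros j. unfold kv.
  destruct (Nat.ltb_spec j n).
  - rewrite (LinB_vsum N); auto. rewrite (sumC_ext n _ (fun l => Cmul (h l) (delta j l))). apply sumC_delta; auto.
    intros; rewrite Hd; auto.
  - rewrite Sh; auto; lia. Qed.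

Lemma kv_sub N n k u w : (forall j, (j < n)%nat -> LinB N (k j)) ->
  kv n k (vsub u w) = vsub (kv n k u) (kv n k w).
Proof. intros H; apply functional_extensionality; intros j; unfold kv, vsub.
  destruct (Nat.ltb_spec j n). apply (LinB_sub N); auto. cx. Qed.

Lemma vsum_sub n a b col : vsum n (vsub a b) col = vsub (vsum n a col) (vsum n b col).
Proof. apply functional_extensionality; intros i; unfold vsum, vsub. rewrite <- sumC_sub. apply sumC_ext; intros; cx. Qed.

Lemma cnorm_RtoC_mul t z : cnorm (Cmul (RtoC t) z) = Rabs t * cnorm z.
Proof. unfold cnorm; simpl. replace (t * Re z - 0 * Im z) with (t * Re z) by ring.
  replace (t * Im z + 0 * Re z) with (t * Im z) by ring. rewrite !Rabs_mult. ring. Qed.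

Lemma normN_RtoC N t w : normN N (vscale (RtoC t) w) = Rabs t * normN N w.
Proof. rewrite !normN_eq, <- sumR_scal. apply sumR_ext; intros; unfold vscale; apply cnorm_RtoC_mul. Qed.

Lemma kv_scal N n k a w : (forall j, (j < n)%nat -> LinB N (k j)) -> kv n k (vscale a w) = vscale a (kv n k w).
Proof. intros H; apply functional_extensionality; intros j; unfold kv, vscale.
  destruct (Nat.ltb_spec j n). apply (H j); auto. cx. Qed.

Lemma vsum_scal n a b col : vsum n (vscale a b) col = vscale a (vsum n b col).
Proof. apply functional_extensionality; intros i; unfold vsum, vscale. rewrite <- sumC_scal. apply sumC_ext; intros; cx. Qed.

Lemma le_all_eps x : 0 <= x -> (forall eta, eta > 0 -> x <= eta) -> x = 0.
Proof. intros H A. destruct H; auto. specialize (A (x/2) ltac:(lra)). lra. Qed.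

Lemma tangent_span n N (S : CV -> Prop) phi D W dphi x v :
  is_open n D -> is_open N W -> holo_map n N phi D dphi -> indep N n (fun j => dphi j x) ->
  (forall y, S y -> supp N y) -> (forall x, D x -> S (phi x) /\ W (phi x)) ->
  (forall y, S y -> W y -> exists x, D x /\ phi x = y) ->
  (forall eps, eps > 0 -> exists del, del > 0 /\ forall x', D x' ->
      normN N (vsub (phi x') (phi x)) < del -> normN n (vsub x' x) < eps) ->
  D x -> tangent S (phi x) v ->
  exists b, supp n b /\ v = vsum n b (fun j => dphi j x).
Proof.
  intros HopD HopW Hh Hind HS HDW Hsurj Hinv Dx Htan.
  set (col := fun j => dphi j x) in *.
  destruct (LA N n col Hind) as [k [Ck HL]].
  pose proof HL as [HLin [Hdel [HCk Hkb]]].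
  exists (kv n k v). split. apply kv_supp.
  set (P := fun w => vsum n (kv n k w) col).
  set (A := INR n * Ck).
  set (CJ := sumR n (fun j => normN N (col j))).
  set (Pn := CJ * A).
  set (K := normN N v + 1).
  assert (HA : 0 <= A) by (unfold A; pose proof (pos_INR n); nra).
  assert (HCJ : 0 <= CJ) by (apply sumR_nonneg; intros; apply normN_ge0).
  assert (HPn : 0 <= Pn) by (unfold Pn; nra).
  assert (HK : 1 <= K) by (unfold K; pose proof (normN_ge0 N v); lra).
  assert (HPb : forall w, normN N (P w) <= Pn * normN N w).
  { intros w. unfold P. eapply Rle_trans. apply normN_vsum. fold CJ.
    pose proof (normN_kv N n k Ck w ltac:(intros; apply Hkb; auto)). fold A in H.
    unfold Pn. rewrite Rmult_assoc. apply Rmult_le_compat_l; auto. }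
  assert (HPJ : forall h, supp n h -> P (vsum n h col) = vsum n h col).
  { intros h Sh. unfold P. rewrite (kv_vsum N n col k Ck h HL Sh). auto. }
  assert (Hkvb : forall w, normN n (kv n k w) <= A * normN N w).
  { intros w. unfold A. apply normN_kv. intros; apply Hkb; auto. }
  destruct Htan as [c [eps [Heps [Hc0 [Hin Hvd]]]]].
  assert (Hvd' : vd c v) by (intros i; apply Hvd).
  assert (Hmain : normN N (vsub v (P v)) = 0).
  { apply le_all_eps. apply normN_ge0. intros eta Heta.
    set (e1 := eta / (2 * (1 + Pn))).
    set (e0 := Rmin (1 / (2 * A + 1)) (eta / (2 * (1 + Pn) * (2 * A * K + 1)))).
    assert (He1 : e1 > 0) by (unfold e1; apply Rdiv_lt_0_compat; lra).
    assert (He0 : e0 > 0). { unfold e0. apply Rmin_pos. apply Rdiv_lt_0_compat; lra.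
      apply Rdiv_lt_0_compat. lra. apply Rmult_lt_0_compat. lra. nra. }
    assert (He0a : A * e0 <= 1/2).
    { assert (e0 <= 1 / (2 * A + 1)) by apply Rmin_l.
      apply Rle_trans with (A * (1 / (2 * A + 1))). apply Rmult_le_compat_l; auto.
      apply Rmult_le_reg_r with (2 * A + 1). lra. field_simplify; lra. }
    assert (He0b : e0 * (2 * (1 + Pn) * (2 * A * K + 1)) <= eta).
    { assert (e0 <= eta / (2 * (1 + Pn) * (2 * A * K + 1))) by apply Rmin_r.
      assert (0 < 2 * (1 + Pn) * (2 * A * K + 1)) by (apply Rmult_lt_0_compat; nra).
      apply Rmult_le_compat_r with (r := 2 * (1 + Pn) * (2 * A * K + 1)) in H; [|lra].
      replace (eta / (2 * (1 + Pn) * (2 * A * K + 1)) * (2 * (1 + Pn) * (2 * A * K + 1))) with eta in H by (field; repeat split; nra). lra. }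
    destruct (vd_normN N c v Hvd' e1 He1) as [d1 [Hd1 V1]].
    destruct (vd_lip N c v Hvd') as [d2 [Hd2 V2]]. fold K in V2.
    destruct (HopW (phi x) (proj2 (HDW x Dx))) as [_ [rW [HrW BW]]].
    destruct (frechet n N phi D dphi HopD Hh x Dx e0 He0) as [dF [HdF F]].
    destruct (Hinv dF HdF) as [dI [HdI I]].
    set (t := Rmin (Rmin eps d1) (Rmin d2 (Rmin (rW / K) (dI / K))) / 2).
    assert (Ht0 : 0 < Rmin (Rmin eps d1) (Rmin d2 (Rmin (rW / K) (dI / K)))).
    { repeat apply Rmin_pos; auto; apply Rdiv_lt_0_compat; lra. }
    assert (Htpos : 0 < t) by (unfold t; lra).
    assert (Hat : Rabs t = t) by (apply Rabs_right; lra).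
    assert (Hte : t < eps /\ t < d1 /\ t < d2 /\ t * K < rW /\ t * K < dI).
    { unfold t. pose proof (Rmin_l (Rmin eps d1) (Rmin d2 (Rmin (rW / K) (dI / K)))).
      pose proof (Rmin_r (Rmin eps d1) (Rmin d2 (Rmin (rW / K) (dI / K)))).
      pose proof (Rmin_l eps d1). pose proof (Rmin_r eps d1). pose proof (Rmin_l d2 (Rmin (rW / K) (dI / K))).
      pose proof (Rmin_r d2 (Rmin (rW / K) (dI / K))). pose proof (Rmin_l (rW / K) (dI / K)). pose proof (Rmin_r (rW / K) (dI / K)).
      set (m := Rmin (Rmin eps d1) (Rmin d2 (Rmin (rW / K) (dI / K)))) in *.
      assert (m / 2 * K < rW). { apply Rmult_lt_reg_r with (/ K). apply Rinv_0_lt_compat; lra.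
        replace (m / 2 * K * / K) with (m/2) by (field; lra). unfold Rdiv in *. lra. }
      assert (m / 2 * K < dI). { apply Rmult_lt_reg_r with (/ K). apply Rinv_0_lt_compat; lra.
        replace (m / 2 * K * / K) with (m/2) by (field; lra). unfold Rdiv in *. lra. }
      repeat split; lra. }
    destruct Hte as [Hte [Htd1 [Htd2 [HtW HtI]]]].
    specialize (V1 t ltac:(lra)). specialize (V2 t ltac:(lra)). rewrite Hat in V1, V2. rewrite Hc0 in V1, V2.
    assert (Sct : S (c t)) by (apply Hin; lra).
    assert (Wct : W (c t)) by (apply BW; [apply HS; auto | lra]).
    destruct (Hsurj _ Sct Wct) as [xt [Dxt Ext]].
    assert (Hxt : normN n (vsub xt x) < dF) by (apply I; auto; rewrite Ext; lra).
    set (h := vsub xt x).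
    assert (Sh : supp n h).
    { intros j Hj. unfold h, vsub. destruct (HopD xt Dxt) as [Sxt _]. destruct (HopD x Dx) as [Sx _].
      rewrite Sxt, Sx by auto. cx. }
    destruct (F h Sh Hxt) as [_ Fb].
    assert (Exh : vadd x h = xt). { apply functional_extensionality; intros; unfold h, vadd, vsub. destruct (xt x0); cx. }
    rewrite Exh, Ext in Fb. fold col in Fb.
    set (Jh := vsum n h col) in *.
    assert (HJh : normN N Jh <= K * t + e0 * normN n h).
    { replace Jh with (vsub (vsub (c t) (phi x)) (vsub (vsub (c t) (phi x)) Jh)).
      eapply Rle_trans. rewrite normN_eq. apply sumR_le. intros; unfold vsub at 1; apply cnorm_sub.
      rewrite sumR_add. rewrite <- !normN_eq. lra.
      apply functional_extensionality; intros; unfold vsub; cx. }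
    assert (Hhb : normN n h <= 2 * A * K * t).
    { assert (normN n h <= A * normN N Jh).
      { rewrite <- (kv_vsum N n col k Ck h HL Sh) at 1. apply Hkvb. }
      pose proof (normN_ge0 n h). nra. }
    set (e := vsub (vscale (RtoC t) v) Jh).
    assert (Heb : normN N e <= (e1 + e0 * (2 * A * K)) * t).
    { replace e with (vadd (vsub (vscale (RtoC t) v) (vsub (c t) (phi x))) (vsub (vsub (c t) (phi x)) Jh)).
      eapply Rle_trans. apply normN_triang.
      assert (normN N (vsub (vscale (RtoC t) v) (vsub (c t) (phi x))) <= e1 * t).
      { rewrite normN_sub_sym. exact V1. }
      nra.
      apply functional_extensionality; intros; unfold e, vadd, vsub; cx. }
    assert (HPe : vsub e (P e) = vscale (RtoC t) (vsub v (P v))).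
    { unfold e, P. rewrite (kv_sub N n k) by auto. rewrite vsum_sub. fold (P Jh). unfold Jh. rewrite HPJ by auto.
      rewrite (kv_scal N n k) by auto. rewrite vsum_scal.
      apply functional_extensionality; intros; unfold vsub, vscale; cx. }
    assert (normN N (vscale (RtoC t) (vsub v (P v))) <= (1 + Pn) * normN N e).
    { rewrite <- HPe. eapply Rle_trans. rewrite normN_eq. apply sumR_le. intros; unfold vsub at 1; apply cnorm_sub.
      rewrite sumR_add. rewrite <- !normN_eq. pose proof (HPb e). lra. }
    rewrite normN_RtoC, Hat in H.
    assert (t * normN N (vsub v (P v)) <= eta * t).
    { eapply Rle_trans. apply H. eapply Rle_trans. apply Rmult_le_compat_l. lra. apply Heb.
      assert ((1 + Pn) * (e1 + e0 * (2 * A * K)) <= eta).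
      { unfold e1. replace ((1 + Pn) * (eta / (2 * (1 + Pn)) + e0 * (2 * A * K))) with (eta / 2 + e0 * ((1 + Pn) * (2 * A * K))) by (field; lra).
        assert (e0 * ((1 + Pn) * (2 * A * K)) <= eta / 2).
        { assert (e0 * ((1 + Pn) * (2 * A * K)) <= e0 * (2 * (1 + Pn) * (2 * A * K + 1)) / 2).
          { assert (0 <= (1 + Pn) * (2 * A * K)) by (apply Rmult_le_pos; [lra| apply Rmult_le_pos; lra]). apply Rmult_le_reg_r with 2. lra.
            replace (e0 * (2 * (1 + Pn) * (2 * A * K + 1)) / 2 * 2) with (e0 * (2 * (1 + Pn) * (2 * A * K + 1))) by field.
            assert ((1 + Pn) * (2 * A * K) * 2 <= 2 * (1 + Pn) * (2 * A * K + 1)) by nra. nra. }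
          lra. }
        lra. }
      nra. }
    apply Rmult_le_reg_l with t; lra. }
  apply functional_extensionality; intros i.
  destruct (Nat.ltb_spec i N).
  - assert (vsub v (P v) i = C0) by (apply (normN_zero N _ Hmain); auto).
    unfold vsub in H0. fold (P v). replace (v i) with (Cadd (Csub (v i) (P v i)) (P v i)) by cx. rewrite H0. cx.
  - assert (Htan : tangent S (phi x) v) by (exists c, eps; exact (conj Heps (conj Hc0 (conj Hin Hvd)))).
    rewrite (tangent_supp S N (phi x) v HS Htan) by lia.
    unfold vsum. rewrite sumC_zero. auto. intros j Hj. unfold col.
    rewrite (dphi_supp n N S phi D dphi x j i HopD Hh HS) by (auto; intros; apply HDW; auto). cx.
Qed.

Lemma vadd_scal0 x b : vadd x (vscale (RtoC 0) b) = x.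
Proof. apply functional_extensionality; intros; unfold vadd, vscale. destruct (x x0); cx. Qed.

Lemma span_tangent n N (S : CV -> Prop) phi D dphi x b :
  is_open n D -> holo_map n N phi D dphi -> (forall y, S y -> supp N y) -> (forall x, D x -> S (phi x)) ->
  D x -> supp n b ->
  exists eps, curve_in S (phi x) (vsum n b (fun j => dphi j x)) (fun t => phi (vadd x (vscale (RtoC t) b))) eps.
Proof. intros HopD Hh HS HD Dx Sb.
  assert (Shb : forall t, supp n (vscale (RtoC t) b)). { intros t j Hj. unfold vscale. rewrite Sb by auto. cx. }
  assert (Hnb : forall t, normN n (vscale (RtoC t) b) = Rabs t * normN n b) by (intros; apply normN_RtoC).
  pose proof (normN_ge0 n b) as Hb0.
  destruct (frechet n N phi D dphi HopD Hh x Dx 1 ltac:(lra)) as [d0 [Hd0 F0]].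
  set (eps := d0 / (normN n b + 1)).
  assert (Heps : eps > 0) by (unfold eps; apply Rdiv_lt_0_compat; lra).
  assert (HDt : forall t, Rabs t < eps -> D (vadd x (vscale (RtoC t) b))).
  { intros t Ht. apply (F0 _ (Shb t)). rewrite Hnb.
    apply Rle_lt_trans with (Rabs t * (normN n b + 1)). pose proof (Rabs_pos t); nra.
    unfold eps in Ht. apply Rmult_lt_reg_r with (/ (normN n b + 1)). apply Rinv_0_lt_compat; lra.
    replace (Rabs t * (normN n b + 1) * / (normN n b + 1)) with (Rabs t) by (field; lra). auto. }
  exists eps. split; [auto|split; [|split]].
  - rewrite vadd_scal0; auto.
  - intros t Ht. apply HD, HDt; auto.
  - intros i. apply sdo_sd. intros e He.
    destruct (Nat.ltb_spec i N).
    + destruct (frechet n N phi D dphi HopD Hh x Dx (e / (normN n b + 1))) as [dF [HdF F]].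
      apply Rdiv_lt_0_compat; lra.
      exists (dF / (normN n b + 1)). split. apply Rdiv_lt_0_compat; lra. intros t Ht.
      assert (normN n (vscale (RtoC t) b) < dF).
      { rewrite Hnb. apply Rle_lt_trans with (Rabs t * (normN n b + 1)). pose proof (Rabs_pos t); nra.
        apply Rmult_lt_reg_r with (/ (normN n b + 1)). apply Rinv_0_lt_compat; lra.
        replace (Rabs t * (normN n b + 1) * / (normN n b + 1)) with (Rabs t) by (field; lra). auto. }
      destruct (F _ (Shb t) H0) as [_ Fb]. rewrite vsum_scal in Fb. rewrite vadd_scal0.
      eapply Rle_trans. apply (normN_comp N (vsub (vsub (phi (vadd x (vscale (RtoC t) b))) (phi x))
       (vscale (RtoC t) (vsum n b (fun j : nat => dphi j x)))) i H).
      eapply Rle_trans. apply Fb. rewrite Hnb.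
      assert (e / (normN n b + 1) * normN n b <= e).
      { apply Rmult_le_reg_r with (normN n b + 1). lra.
        replace (e / (normN n b + 1) * normN n b * (normN n b + 1)) with (e * normN n b) by (field; lra). nra. }
      pose proof (Rabs_pos t). nra.
    + exists eps. split; auto. intros t Ht. rewrite vadd_scal0.
      rewrite (HS _ (HD _ (HDt t Ht))) by auto. rewrite (HS _ (HD _ Dx)) by auto.
      unfold vsum. rewrite sumC_zero. replace (Csub (Csub C0 C0) (Cmul (RtoC t) C0)) with C0 by cx.
      rewrite cnorm_C0. pose proof (Rabs_pos t). nra.
      intros j Hj. rewrite (dphi_supp n N S phi D dphi x j i) by auto. cx. Qed.

Definition contAt (n : nat) (D : CV -> Prop) (x0 : CV) (g : CV -> Cx) : Prop :=
  forall eps, eps > 0 -> exists del, del > 0 /\ forall y, D y -> normN n (vsub y x0) < del ->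
    cnorm (Csub (g y) (g x0)) < eps.

Section Cont.
Variables (n : nat) (D : CV -> Prop) (x0 : CV).

Lemma contAt_const c : contAt n D x0 (fun _ => c).
Proof. intros e He. exists 1; split; [lra|]. intros. replace (Csub c c) with C0 by cx. rewrite cnorm_C0; lra. Qed.

Lemma contAt_ext g h : (forall y, g y = h y) -> contAt n D x0 g -> contAt n D x0 h.
Proof. intros E H e He. destruct (H e He) as [d [Hd A]]. exists d; split; auto. intros; rewrite <- !E; auto. Qed.

Lemma contAt_add g h : contAt n D x0 g -> contAt n D x0 h -> contAt n D x0 (fun y => Cadd (g y) (h y)).
Proof. intros A B e He. destruct (A (e/2) ltac:(lra)) as [d1 [Hd1 A']]. destruct (B (e/2) ltac:(lra)) as [d2 [Hd2 B']].
  exists (Rmin d1 d2); split. apply Rmin_pos; auto. intros y Dy Hy.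
  pose proof (Rmin_l d1 d2); pose proof (Rmin_r d1 d2).
  specialize (A' y Dy ltac:(lra)). specialize (B' y Dy ltac:(lra)).
  replace (Csub (Cadd (g y) (h y)) (Cadd (g x0) (h x0))) with (Cadd (Csub (g y) (g x0)) (Csub (h y) (h x0))) by cx.
  eapply Rle_lt_trans. apply cnorm_add. lra. Qed.

Lemma contAt_opp g : contAt n D x0 g -> contAt n D x0 (fun y => Copp (g y)).
Proof. intros A e He. destruct (A e He) as [d [Hd A']]. exists d; split; auto. intros y Dy Hy.
  replace (Csub (Copp (g y)) (Copp (g x0))) with (Copp (Csub (g y) (g x0))) by cx. rewrite cnorm_opp; auto. Qed.

Lemma contAt_sub g h : contAt n D x0 g -> contAt n D x0 h -> contAt n D x0 (fun y => Csub (g y) (h y)).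
Proof. intros. unfold Csub. apply contAt_add; auto. apply contAt_opp; auto. Qed.

Lemma contAt_conj g : contAt n D x0 g -> contAt n D x0 (fun y => Cconj (g y)).
Proof. intros A e He. destruct (A e He) as [d [Hd A']]. exists d; split; auto. intros y Dy Hy.
  replace (Csub (Cconj (g y)) (Cconj (g x0))) with (Cconj (Csub (g y) (g x0))) by cx. rewrite cnorm_conj; auto. Qed.

Lemma contAt_mul g h : contAt n D x0 g -> contAt n D x0 h -> contAt n D x0 (fun y => Cmul (g y) (h y)).
Proof. intros A B e He.
  set (a := cnorm (g x0)). set (b := cnorm (h x0)).
  assert (Ha : 0 <= a) by apply cnorm_ge0. assert (Hb : 0 <= b) by apply cnorm_ge0.
  set (e1 := Rmin 1 (e / (a + b + 2))).
  assert (He1 : e1 > 0) by (apply Rmin_pos; [lra| apply Rdiv_lt_0_compat; lra]).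
  destruct (A e1 He1) as [d1 [Hd1 A']]. destruct (B e1 He1) as [d2 [Hd2 B']].
  exists (Rmin d1 d2); split. apply Rmin_pos; auto. intros y Dy Hy.
  pose proof (Rmin_l d1 d2); pose proof (Rmin_r d1 d2).
  specialize (A' y Dy ltac:(lra)). specialize (B' y Dy ltac:(lra)).
  replace (Csub (Cmul (g y) (h y)) (Cmul (g x0) (h x0))) with
    (Cadd (Cadd (Cmul (Csub (g y) (g x0)) (h x0)) (Cmul (g x0) (Csub (h y) (h x0)))) (Cmul (Csub (g y) (g x0)) (Csub (h y) (h x0)))) by cx.
  pose proof (cnorm_mul (Csub (g y) (g x0)) (h x0)). pose proof (cnorm_mul (g x0) (Csub (h y) (h x0))).
  pose proof (cnorm_mul (Csub (g y) (g x0)) (Csub (h y) (h x0))).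
  pose proof (cnorm_add (Cadd (Cmul (Csub (g y) (g x0)) (h x0)) (Cmul (g x0) (Csub (h y) (h x0)))) (Cmul (Csub (g y) (g x0)) (Csub (h y) (h x0)))).
  pose proof (cnorm_add (Cmul (Csub (g y) (g x0)) (h x0)) (Cmul (g x0) (Csub (h y) (h x0)))).
  fold a b in H1, H2.
  pose proof (cnorm_ge0 (Csub (g y) (g x0))). pose proof (cnorm_ge0 (Csub (h y) (h x0))).
  assert (e1 <= 1) by apply Rmin_l. assert (e1 <= e / (a + b + 2)) by apply Rmin_r.
  assert (e1 * (a + b + 2) <= e). { apply Rmult_le_reg_r with (/ (a + b + 2)). apply Rinv_0_lt_compat; lra.
    replace (e1 * (a + b + 2) * / (a + b + 2)) with e1 by (field; lra). unfold Rdiv in H9. lra. }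
  assert (cnorm (Csub (g y) (g x0)) * b <= e1 * b) by (apply Rmult_le_compat_r; lra).
  assert (a * cnorm (Csub (h y) (h x0)) <= a * e1) by (apply Rmult_le_compat_l; lra).
  assert (cnorm (Csub (g y) (g x0)) * cnorm (Csub (h y) (h x0)) <= e1 * e1) by (apply Rmult_le_compat; lra).
  assert (e1 * e1 <= e1) by nra.
  assert (cnorm (Csub (g y) (g x0)) * b + a * cnorm (Csub (h y) (h x0)) + cnorm (Csub (g y) (g x0)) * cnorm (Csub (h y) (h x0)) < e).
  { assert (cnorm (Csub (g y) (g x0)) * cnorm (Csub (h y) (h x0)) < e1).
    { apply Rle_lt_trans with (e1 * cnorm (Csub (h y) (h x0))). apply Rmult_le_compat_r; lra.
      apply Rle_lt_trans with (1 * cnorm (Csub (h y) (h x0))). apply Rmult_le_compat_r; lra. lra. }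
    nra. }
  lra. Qed.

Lemma contAt_sumC m F : (forall j, (j < m)%nat -> contAt n D x0 (F j)) -> contAt n D x0 (fun y => sumC m (fun j => F j y)).
Proof. induction m; intros H. simpl. apply contAt_const.
  simpl. apply (contAt_add (fun y => sumC m (fun j => F j y)) (F m)). apply IHm; intros; apply H; lia. apply H; lia. Qed.

Lemma contAt_Omega A B : (forall i, contAt n D x0 (fun y => A y i)) -> (forall i, contAt n D x0 (fun y => B y i)) ->
  forall k, contAt n D x0 (fun y => Omega k (A y) (B y)).
Proof. intros HA HB k. unfold Omega. apply (contAt_sumC k (fun i y => Csub (Cmul (A y i) (B y (k + i)%nat)) (Cmul (A y (k + i)%nat) (B y i)))).
  intros. apply contAt_sub; apply contAt_mul; auto. Qed.

Lemma contAt_hOmega A B : (forall i, contAt n D x0 (fun y => A y i)) -> (forall i, contAt n D x0 (fun y => B y i)) ->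
  forall k, contAt n D x0 (fun y => hOmega k (A y) (tau (B y))).
Proof. intros HA HB k. unfold hOmega.
  assert (HtB : forall i, contAt n D x0 (fun y => tau (B y) i)) by (intros; unfold tau; apply contAt_conj; auto).
  apply contAt_add. apply contAt_sub; apply contAt_mul; auto.
  apply (contAt_Omega (fun y => shift2 (A y)) (fun y => shift2 (tau (B y)))); intros; unfold shift2; auto. Qed.

End Cont.

(* perturbation of injective matrices *)
Lemma perturb m (M0 : nat -> nat -> Cx) k C :
  leftinv m m (fun l => fun kk => M0 kk l) k C ->
  forall (M : nat -> nat -> Cx) (a : nat -> Cx),
  (forall kk l, (kk < m)%nat -> (l < m)%nat -> cnorm (Csub (M kk l) (M0 kk l)) <= 1 / (2 * (INR m * INR m * C + 1))) ->
  (forall kk, (kk < m)%nat -> sumC m (fun l => Cmul (a l) (M kk l)) = C0) ->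
  forall l, (l < m)%nat -> a l = C0.
Proof. intros HL M a Hd Ha.
  destruct HL as [Hlin [Hdel [HC Hb]]].
  set (dl := 1 / (2 * (INR m * INR m * C + 1))).
  assert (Hdl : 0 < dl). { unfold dl. pose proof (pos_INR m). assert (0 <= INR m * INR m * C) by (apply Rmult_le_pos; nra). apply Rdiv_lt_0_compat; lra. }
  set (col := fun l => fun kk => M0 kk l).
  set (r := fun kk => sumC m (fun l => Cmul (a l) (Csub (M0 kk l) (M kk l)))).
  assert (Hr : forall j, (j < m)%nat -> a j = k j r).
  { intros j Hj. assert (k j (vsum m a col) = a j).
    { rewrite (LinB_vsum m); auto. rewrite (sumC_ext m _ (fun l => Cmul (a l) (delta j l))). apply sumC_delta; auto.
      intros l0 Hl0; f_equal; apply (Hdel j l0); auto. }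
    rewrite <- H. replace (k j r) with (Cadd (k j (vsub r (vsum m a col))) (k j (vsum m a col))).
    2:{ rewrite <- (proj1 (Hlin j Hj)). f_equal. apply functional_extensionality; intros; unfold vadd, vsub; cx. }
    assert (k j (vsub r (vsum m a col)) = C0).
    { apply cnorm0. apply Rle_antisym. 2: apply cnorm_ge0. eapply Rle_trans. apply Hb; auto.
      replace (normN m (vsub r (vsum m a col))) with 0. lra.
      symmetry. rewrite normN_eq. rewrite (sumR_ext m _ (fun _ => 0)). rewrite sumR_const; ring.
      intros kk Hk. unfold vsub, r, vsum, col. rewrite <- sumC_sub.
      rewrite (sumC_ext m _ (fun l => Copp (Cmul (a l) (M kk l)))). rewrite sumC_opp, Ha by auto.
      replace (Copp C0) with C0 by cx. apply cnorm_C0. intros; cx. }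
    rewrite H0. destruct (k j (vsum m a col)); cx. }
  set (s := sumR m (fun l => cnorm (a l))).
  assert (Hs : s <= INR m * INR m * C * dl * s).
  { apply Rle_trans with (sumR m (fun _ => INR m * C * dl * s)).
    2:{ rewrite sumR_const. right; ring. }
    unfold s at 1. apply sumR_le. intros j Hj. rewrite Hr by auto.
    eapply Rle_trans. apply Hb; auto. rewrite normN_eq.
    assert (sumR m (fun kk => cnorm (r kk)) <= INR m * dl * s).
    { apply Rle_trans with (sumR m (fun _ => dl * s)). 2:{ rewrite sumR_const; right; ring. }
      apply sumR_le. intros kk Hk. unfold r. eapply Rle_trans. apply cnorm_sum.
      unfold s. rewrite <- sumR_scal. apply sumR_le. intros l Hl. eapply Rle_trans. apply cnorm_mul.
      replace (Csub (M0 kk l) (M kk l)) with (Copp (Csub (M kk l) (M0 kk l))) by cx. rewrite cnorm_opp.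
      pose proof (Hd kk l Hk Hl). pose proof (cnorm_ge0 (a l)). fold dl in H. nra. }
    assert (C * sumR m (fun kk => cnorm (r kk)) <= C * (INR m * dl * s)) by (apply Rmult_le_compat_l; auto).
    nra. }
  assert (INR m * INR m * C * dl <= 1/2).
  { unfold dl. pose proof (pos_INR m). assert (0 <= INR m * INR m * C) by (apply Rmult_le_pos; nra).
    apply Rmult_le_reg_r with (2 * (INR m * INR m * C + 1)). lra. field_simplify; lra. }
  assert (s = 0). { assert (0 <= s) by apply sumR_cnorm_nonneg. assert (0 <= INR m * INR m * C * dl) by (pose proof (pos_INR m); apply Rmult_le_pos; [apply Rmult_le_pos|]; nra). nra. }
  intros l Hl. apply cnorm0. apply Rle_antisym; [|apply cnorm_ge0].
  rewrite <- H0. apply (sumR_term m (fun l => cnorm (a l))); auto. intros; apply cnorm_ge0. Qed.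

Lemma contAt_zeroD n D x0 g : (forall y, D y -> g y = C0) -> D x0 -> contAt n D x0 g.
Proof. intros H Dx e He. exists 1; split; [lra|]. intros y Dy _. rewrite !H by auto.
  replace (Csub C0 C0) with C0 by cx. rewrite cnorm_C0; lra. Qed.

Lemma cont_frechet n N g D dg x0 : is_open n D -> holo_map n N g D dg -> D x0 ->
  forall i, (i < N)%nat -> contAt n D x0 (fun y => g y i).
Proof. intros HopD Hh Dx i Hi e He.
  destruct (frechet n N g D dg HopD Hh x0 Dx 1 ltac:(lra)) as [dF [HdF F]].
  set (CJ := sumR n (fun j => normN N (dg j x0))).
  assert (HCJ : 0 <= CJ) by (apply sumR_nonneg; intros; apply normN_ge0).
  exists (Rmin dF (e / (CJ + 2))). split. apply Rmin_pos; auto. apply Rdiv_lt_0_compat; lra.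
  intros y Dy Hy. pose proof (Rmin_l dF (e / (CJ + 2))). pose proof (Rmin_r dF (e / (CJ + 2))).
  set (h := vsub y x0) in *.
  assert (Sh : supp n h). { intros j Hj. unfold h, vsub. destruct (HopD y Dy) as [Sy _]. destruct (HopD x0 Dx) as [Sx _].
    rewrite Sy, Sx by auto. cx. }
  destruct (F h Sh ltac:(lra)) as [_ Fb].
  assert (Eh : vadd x0 h = y) by (apply functional_extensionality; intros; unfold h, vadd, vsub; destruct (y x); cx).
  rewrite Eh in Fb.
  pose proof (normN_vsum N n h (fun j => dg j x0)). cbv beta in H1; fold CJ in H1.
  assert (normN N (vsub (g y) (g x0)) <= (CJ + 1) * normN n h).
  { replace (vsub (g y) (g x0)) with (vadd (vsub (vsub (g y) (g x0)) (vsum n h (fun j => dg j x0))) (vsum n h (fun j => dg j x0))).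
    eapply Rle_trans. apply normN_triang. rewrite Rmult_plus_distr_r, Rmult_1_l. lra.
    apply functional_extensionality; intros; unfold vadd, vsub; cx. }
  eapply Rle_lt_trans. apply (normN_comp N (vsub (g y) (g x0)) i Hi).
  eapply Rle_lt_trans. apply H2.
  pose proof (normN_ge0 n h).
  apply Rle_lt_trans with ((CJ + 2) * normN n h). nra.
  apply Rmult_lt_reg_r with (/ (CJ + 2)). apply Rinv_0_lt_compat; lra.
  replace ((CJ + 2) * normN n h * / (CJ + 2)) with (normN n h) by (field; lra).
  replace (e * / (CJ + 2)) with (e / (CJ + 2)) by (unfold Rdiv; auto). lra. Qed.

Section Main.
Variables (n : nat) (L : CV -> Prop) (f : CV -> Cx) (phi : CV -> CV) (D W : CV -> Prop) (dphi : nat -> CV -> CV).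
Hypothesis HLs : forall y, L y -> supp (2 * n) y.
Hypothesis HopD : is_open n D.
Hypothesis HopW : is_open (2 * n) W.
Hypothesis Hh : holo_map n (2 * n) phi D dphi.
Hypothesis Hind : forall x, D x -> indep (2 * n) n (fun j => dphi j x).
Hypothesis HDW : forall x, D x -> L (phi x) /\ W (phi x).
Hypothesis Hsurj : forall y, L y -> W y -> exists x, D x /\ phi x = y.
Hypothesis Hinv : forall x, D x -> forall eps, eps > 0 -> exists del, del > 0 /\ forall x', D x' ->
      normN (2 * n) (vsub (phi x') (phi x)) < del -> normN n (vsub x' x) < eps.
Hypothesis Hdf : forall p v c eps, curve_in L p v c eps -> sd (fun t => f (c t)) (Copp (Omega n p v)).

Definition Ev x := lift Defs.C1 (f (phi x)) (phi x).
Definition Vv x j := lift C0 (Copp (Omega n (phi x) (dphi j x))) (dphi j x).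
Definition col x l := match l with O => Ev x | S j => Vv x j end.
Definition Mx x kk l := hOmega n (col x l) (tau (col x kk)).

Lemma tspan x v : D x -> tangent L (phi x) v -> exists b, supp n b /\ v = vsum n b (fun j => dphi j x).
Proof. intros Dx Ht. apply (tangent_span n (2 * n) L phi D W dphi x v); auto. Qed.

Lemma cone_decomp (U : CV -> Prop) y lam v :
  (forall p, U p -> L p) -> D y -> lam <> C0 ->
  tangent (cone U f) (vscale lam (Ev y)) v ->
  exists a, v = vsum (S n) a (col y).
Proof.
  intros HUL Dy Hlam [c [eps [Heps [Hc0 [Hin Hvd]]]]].
  set (pc := fun t => fun i => Cmul (Cinv (c t 0%nat)) (c t (S (S i)))).
  assert (Hct : forall t, Rabs t < eps -> c t 0%nat <> C0 /\ U (pc t) /\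
     c t 1%nat = Cmul (c t 0%nat) (f (pc t)) /\ forall i, c t (S (S i)) = Cmul (c t 0%nat) (pc t i)).
  { intros t Ht. destruct (Hin t Ht) as [lt [qt [Hlt [Uqt Eq]]]].
    assert (E0 : c t 0%nat = lt) by (rewrite Eq; unfold vscale, lift; cx).
    assert (Epc : pc t = qt).
    { apply functional_extensionality; intros i. unfold pc. rewrite E0, Eq. unfold vscale, lift.
      rewrite <- Cmul_assoc, Cinv_l by auto. apply Cmul_1_l. }
    rewrite Epc, E0. split; auto. split; auto. split.
    rewrite Eq; unfold vscale, lift; auto. intros i. rewrite Eq; unfold vscale, lift; auto. }
  set (l0 := c 0 0%nat).
  assert (Hl0 : l0 <> C0) by (apply (proj1 (Hct 0 ltac:(rewrite Rabs_R0; lra)))).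
  assert (El0 : l0 = lam) by (unfold l0; rewrite Hc0; unfold vscale, Ev, lift; cx).
  set (p := phi y).
  assert (Hpc0 : pc 0 = p).
  { apply functional_extensionality; intros i. unfold pc. rewrite Hc0. unfold vscale, Ev, lift.
    replace (Cmul lam Defs.C1) with lam by cx. rewrite <- Cmul_assoc, Cinv_l by auto. apply Cmul_1_l. }
  set (u := fun i => Cadd (Cmul (Copp (Cmul (v 0%nat) (Cmul (Cinv l0) (Cinv l0)))) (c 0 (S (S i)))) (Cmul (Cinv l0) (v (S (S i))))).
  assert (Hsdu : forall i, sd (fun t => pc t i) (u i)).
  { intros i. unfold pc, u. apply (sd_mul (fun t => Cinv (c t 0%nat)) (fun t => c t (S (S i)))).
    apply sd_inv; auto. apply Hvd. apply Hvd. }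
  assert (Hcurve : curve_in L p u pc eps).
  { split; auto. split; auto. split. intros t Ht. apply HUL, (Hct t Ht). intros i. apply Hsdu. }
  assert (Htan : tangent L (phi y) u) by (exists pc, eps; auto).
  destruct (tspan y u Dy Htan) as [b [Sb Eu]].
  pose proof (Hdf _ _ _ _ Hcurve) as Hf.
  assert (Ev1 : v 1%nat = Cadd (Cmul (v 0%nat) (f p)) (Cmul l0 (Copp (Omega n p u)))).
  { apply (sd_unique (fun t => c t 1%nat)). apply Hvd.
    apply (sd_loc (fun t => Cmul (c t 0%nat) (f (pc t))) _ _ eps); auto.
    intros t Ht. symmetry; apply (Hct t Ht).
    rewrite <- Hpc0 at 1. apply (sd_mul (fun t => c t 0%nat) (fun t => f (pc t))). apply Hvd. auto. }
  assert (Ev2 : forall i, v (S (S i)) = Cadd (Cmul (v 0%nat) (p i)) (Cmul l0 (u i))).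
  { intros i. apply (sd_unique (fun t => c t (S (S i)))). apply Hvd.
    apply (sd_loc (fun t => Cmul (c t 0%nat) (pc t i)) _ _ eps); auto.
    intros t Ht. symmetry; apply (Hct t Ht).
    replace (p i) with (pc 0 i) by (rewrite Hpc0; auto).
    apply (sd_mul (fun t => c t 0%nat) (fun t => pc t i)). apply Hvd. auto. }
  exists (fun l => match l with O => v 0%nat | S j => Cmul l0 (b j) end).
  apply functional_extensionality; intros i. unfold vsum. rewrite sumC_shift.
  destruct i as [|[|i]].
  - simpl col. unfold Ev, Vv, lift. rewrite sumC_zero. cx. intros; cx.
  - rewrite Ev1. simpl col. unfold Ev, Vv, lift. fold p. rewrite Eu, Omega_sum_r.
    rewrite <- sumC_opp, <- sumC_scal. rewrite (sumC_ext n _ (fun j => Cmul (Cmul l0 (b j)) (Copp (Omega n p (dphi j y))))). cx.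
    intros; cx.
  - rewrite Ev2. simpl col. unfold Ev, Vv, lift. fold p. rewrite Eu. unfold vsum.
    rewrite <- sumC_scal. rewrite (sumC_ext n _ (fun j => Cmul (Cmul l0 (b j)) (dphi j y i))). cx. intros; cx.
Qed.


Lemma cnorm_pos a : a <> C0 -> cnorm a > 0.
Proof. intros H. pose proof (cnorm_ge0 a). destruct H0; auto. exfalso; apply H, cnorm0; auto. Qed.

Lemma test0 (U : CV -> Prop) y lam : lam <> C0 -> U (phi y) ->
  tangent (cone U f) (vscale lam (Ev y)) (Ev y).
Proof. intros Hlam Uy. exists (fun t => vscale (Cadd lam (RtoC t)) (Ev y)), (cnorm lam).
  split. apply cnorm_pos; auto. split.
  - apply functional_extensionality; intros; unfold vscale. f_equal. destruct lam; cx.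
  - split.
    + intros t Ht. exists (Cadd lam (RtoC t)), (phi y). split; [|split; auto].
      intros E. assert (H1 := f_equal Re E). assert (H2 := f_equal Im E). simpl in H1, H2.
      unfold cnorm in Ht. replace (Im lam) with 0 in Ht by lra. replace (Re lam) with (- t) in Ht by lra.
      rewrite Rabs_R0, Rabs_Ropp in Ht. lra.
    + intros i. assert (sd (fun t => Cmul (Cadd lam (RtoC t)) (Ev y i)) (Cadd (Cmul (Cadd C0 Defs.C1) (Ev y i)) (Cmul (Cadd lam (RtoC 0)) C0))).
      { apply (sd_mul (fun t => Cadd lam (RtoC t)) (fun _ => Ev y i)). apply sd_add. apply sd_const.
        apply (sd_ext (fun t => Cmul (RtoC t) Defs.C1)). intros; cx. apply sd_lin. apply sd_const. }
      replace (Cadd (Cmul (Cadd C0 Defs.C1) (Ev y i)) (Cmul (Cadd lam (RtoC 0)) C0)) with (Ev y i) in H by (destruct (Ev y i); cx).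
      exact H. Qed.

Lemma testk (U : CV -> Prop) y lam k : D y -> lam <> C0 -> (k < n)%nat ->
  (exists r, r > 0 /\ forall z, D z -> normN n (vsub z y) < r -> U (phi z)) ->
  tangent (cone U f) (vscale lam (Ev y)) (vscale lam (Vv y k)).
Proof. intros Dy Hlam Hk [r [Hr HU]].
  destruct (HopD y Dy) as [Sy [rD [HrD BD]]].
  set (z := fun t => vadd y (vscale (RtoC t) (ebasis k))).
  assert (Hz : forall t, Rabs t < Rmin r rD -> D (z t) /\ U (phi (z t))).
  { intros t Ht. pose proof (Rmin_l r rD); pose proof (Rmin_r r rD).
    assert (Hn : normN n (vsub (z t) y) = Rabs t).
    { replace (vsub (z t) y) with (vscale (RtoC t) (ebasis k)). apply normN_ebasis; auto.
      apply functional_extensionality; intros; unfold z, vsub, vadd; cx. }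
    assert (D (z t)). { apply BD. intros j Hj. unfold z, vadd, vscale, ebasis. rewrite Sy by auto.
      destruct (Nat.eqb_spec j k). lia. cx. lra. }
    split; auto. apply HU; auto. lra. }
  assert (Hr0 : Rmin r rD > 0) by (apply Rmin_pos; auto).
  assert (Hcz : curve_in L (phi y) (dphi k y) (fun t => phi (z t)) (Rmin r rD)).
  { split; auto. split. unfold z. rewrite vadd_scal0; auto. split.
    intros t Ht. apply HDW, Hz; auto. intros i. destruct (Hh y Dy k Hk) as [A _]. apply A. }
  pose proof (Hdf _ _ _ _ Hcz) as Hf.
  exists (fun t => vscale lam (Ev (z t))), (Rmin r rD).
  split; auto. split.
  - unfold z. rewrite vadd_scal0; auto.
  - split.
    + intros t Ht. exists lam, (phi (z t)). split; auto. split; auto. apply Hz; auto.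
    + intros i. destruct i as [|[|i]]; unfold vscale, Ev, Vv, lift.
      * apply (sd_scal lam (fun _ => Defs.C1)). apply sd_const.
      * apply (sd_scal lam (fun t => f (phi (z t)))). exact Hf.
      * apply (sd_scal lam (fun t => phi (z t) i)). destruct (Hh y Dy k Hk) as [A _]. apply A.
Qed.

Lemma tau_lift a b u : tau (lift a b u) = lift (Cconj a) (Cconj b) (tau u).
Proof. apply functional_extensionality; intros [|[|i]]; reflexivity. Qed.

Lemma shift2_lift a b u : shift2 (lift a b u) = u.
Proof. apply functional_extensionality; intros; reflexivity. Qed.

Lemma radical_eqs y lam a v : lam <> C0 -> v = vsum (S n) a (col y) ->
  hgamma n v (Ev y) = C0 -> (forall k, (k < n)%nat -> hgamma n v (vscale lam (Vv y k)) = C0) ->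
  forall kk, (kk < S n)%nat -> sumC (S n) (fun l => Cmul (a l) (Mx y kk l)) = C0.
Proof. intros Hlam Ev0 H0 Hk kk Hkk. unfold hgamma in *. subst v. destruct kk as [|k].
  - rewrite hOmega_sum_l in H0. apply Cmul_eq0 in H0; [|apply Ci_neq0]. exact H0.
  - specialize (Hk k ltac:(lia)). rewrite tau_scal, hOmega_sum_l in Hk. apply Cmul_eq0 in Hk; [|apply Ci_neq0].
    rewrite (sumC_ext (S n) _ (fun l => Cmul (Cconj lam) (Cmul (a l) (Mx y (S k) l)))) in Hk.
    rewrite sumC_scal in Hk. apply Cmul_eq0 in Hk; auto. apply Cconj_neq0; auto.
    intros l Hl. rewrite hOmega_scal_r. unfold Mx. simpl col. cx. Qed.

Hypothesis Hkael : kaehlerian n L.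

Lemma claimA x0 : D x0 -> tau (phi x0) = phi x0 -> Im (f (phi x0)) <> 0 ->
  indep (S n) (S n) (fun l kk => Mx x0 kk l).
Proof. intros Dx0 Hreal Hf a Ha.
  set (q := phi x0) in *.
  assert (HM00 : Mx x0 0 0 = Csub (Cconj (f q)) (f q)).
  { unfold Mx; simpl col; unfold Ev, hOmega. rewrite tau_lift, !shift2_lift. fold q. rewrite Hreal, Omega_self. cx. }
  assert (HM0S : forall j, Mx x0 0 (S j) = C0).
  { intros j. unfold Mx; simpl col; unfold Ev, Vv, hOmega. rewrite tau_lift, !shift2_lift. fold q. rewrite Hreal.
    rewrite (Omega_antisym n (dphi j x0) q). cx. }
  assert (HMS0 : forall k, Mx x0 (S k) 0 = C0).
  { intros k. unfold Mx; simpl col; unfold Ev, Vv, hOmega. rewrite tau_lift, !shift2_lift. fold q.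
    assert (Cconj (Copp (Omega n q (dphi k x0))) = Copp (Omega n q (tau (dphi k x0)))).
    { replace (Cconj (Copp (Omega n q (dphi k x0)))) with (Copp (Cconj (Omega n q (dphi k x0)))) by cx.
      rewrite Omega_conj. fold q. rewrite Hreal. auto. }
    rewrite H. cx. }
  assert (HMSS : forall k j, Mx x0 (S k) (S j) = Omega n (dphi j x0) (tau (dphi k x0))).
  { intros k j. unfold Mx; simpl col; unfold Vv, hOmega. rewrite tau_lift, !shift2_lift. cx. }
  assert (Ha0 : a 0%nat = C0).
  { specialize (Ha 0%nat ltac:(lia)). unfold vsum in Ha. rewrite sumC_shift, HM00 in Ha.
    rewrite sumC_zero in Ha. 2:{ intros; rewrite HM0S; cx. }
    rewrite Cadd_0_r in Ha. apply (Cmul_eq0 (Csub (Cconj (f q)) (f q))). rewrite Cmul_comm; auto.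
    intros E. assert (H1 := f_equal Im E). simpl in H1. apply Hf. lra. }
  set (b := fun j => if Nat.ltb j n then a (S j) else C0).
  set (u := vsum n b (fun j => dphi j x0)).
  assert (Hu : forall k, (k < n)%nat -> Omega n u (tau (dphi k x0)) = C0).
  { intros k Hk. specialize (Ha (S k) ltac:(lia)). unfold vsum in Ha. rewrite sumC_shift, HMS0, Ha0 in Ha.
    unfold u. rewrite Omega_sum_l. rewrite <- Ha. rewrite Cmul_0_l, Cadd_0_l. apply sumC_ext. intros j Hj.
    rewrite HMSS. unfold b. destruct (Nat.ltb_spec j n); auto; lia. }
  assert (Sb : supp n b). { intros j Hj. unfold b. destruct (Nat.ltb_spec j n); auto; lia. }
  assert (Hutan : tangent L q u).
  { destruct (span_tangent n (2 * n) L phi D dphi x0 b HopD Hh HLs) as [eps Hc]; auto.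
    intros; apply HDW; auto. exists (fun t => phi (vadd x0 (vscale (RtoC t) b))), eps. exact Hc. }
  assert (Hu0 : u = vzero).
  { apply (Hkael q (proj1 (HDW x0 Dx0)) u Hutan). intros w Hw.
    destruct (tspan x0 w Dx0 Hw) as [e [Se Ew]]. unfold gamma.
    assert (tau w = vsum n (fun j => Cconj (e j)) (fun j => tau (dphi j x0))).
    { rewrite Ew. apply functional_extensionality; intros i. unfold tau, vsum. rewrite Cconj_sumC.
      apply sumC_ext; intros; cx. }
    rewrite H, Omega_sum_r. rewrite sumC_zero. cx. intros j Hj. rewrite Hu; auto; cx. }
  intros l Hl. destruct l as [|j]; auto.
  assert (b j = C0).
  { apply (Hind x0 Dx0 b); [|lia]. intros i Hi. fold u. rewrite Hu0. reflexivity. }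
  unfold b in H. destruct (Nat.ltb_spec j n); auto; lia.
Qed.

Hypothesis HfD : exists dF, holo_map n 1 (fun x _ => f (phi x)) D dF.

Lemma phi_cont x0 : D x0 -> forall i, contAt n D x0 (fun y => phi y i).
Proof. intros Dx i. destruct (Nat.ltb_spec i (2 * n)).
  - apply (cont_frechet n (2 * n) phi D dphi); auto.
  - apply contAt_zeroD; auto. intros y Dy. apply (HLs _ (proj1 (HDW y Dy))); auto. Qed.

Lemma dphi_cont x0 j : D x0 -> (j < n)%nat -> forall i, contAt n D x0 (fun y => dphi j y i).
Proof. intros Dx Hj i. destruct (Nat.ltb_spec i (2 * n)).
  - intros e He. destruct (Hh x0 Dx j Hj) as [_ [_ C]]. destruct (C e He) as [d [Hd A]].
    exists d; split; auto. intros y Dy Hy. eapply Rle_lt_trans. 2: apply (A y Dy Hy).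
    apply (normN_comp (2 * n) (vsub (dphi j y) (dphi j x0)) i); auto.
  - apply contAt_zeroD; auto. intros y Dy. apply (dphi_supp n (2 * n) L phi D dphi y j i); auto.
    intros; apply HDW; auto. Qed.

Lemma col_cont x0 l : D x0 -> (l < S n)%nat -> forall i, contAt n D x0 (fun y => col y l i).
Proof. intros Dx Hl i. destruct l as [|j].
  - destruct i as [|[|i]]; simpl; unfold Ev, lift.
    + apply contAt_const.
    + destruct HfD as [dF HF]. apply (cont_frechet n 1 (fun x _ => f (phi x)) D dF x0 HopD HF Dx 0); lia.
    + apply phi_cont; auto.
  - destruct i as [|[|i]]; simpl; unfold Vv, lift.
    + apply contAt_const.
    + apply contAt_opp. apply (contAt_Omega n D x0 phi (dphi j)). apply phi_cont; auto. apply dphi_cont; auto; lia.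
    + apply dphi_cont; auto; lia. Qed.

Lemma main_chart x0 : D x0 -> tau (phi x0) = phi x0 -> Im (f (phi x0)) <> 0 ->
  exists U : CV -> Prop, (forall p, U p -> L p) /\ rel_open (2 * n) L U /\ U (phi x0) /\
    nondeg_on (hgamma n) (cone U f).
Proof. intros Dx0 Hreal Hf.
  pose proof (claimA x0 Dx0 Hreal Hf) as Hinj.
  destruct (LA (S n) (S n) _ Hinj) as [kap [CK HL]].
  set (dM := 1 / (2 * (INR (S n) * INR (S n) * CK + 1))).
  assert (HdM : dM > 0). { unfold dM. destruct HL as [_ [_ [HC _]]]. pose proof (pos_INR (S n)).
    assert (0 <= INR (S n) * INR (S n) * CK) by (apply Rmult_le_pos; nra). apply Rdiv_lt_0_compat; lra. }
  destruct (finite_delta (S n) (fun kk d => forall l, (l < S n)%nat -> forall y, D y -> normN n (vsub y x0) < d ->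
     cnorm (Csub (Mx y kk l) (Mx x0 kk l)) < dM)) as [rho [Hrho Hcont]].
  { intros kk Hkk. apply (finite_delta (S n) (fun l d => forall y, D y -> normN n (vsub y x0) < d ->
     cnorm (Csub (Mx y kk l) (Mx x0 kk l)) < dM)).
    - intros l Hl. apply (contAt_hOmega n D x0 (fun y => col y l) (fun y => col y kk)); auto.
      apply col_cont; auto. apply col_cont; auto.
    - intros l d d' A B y Dy Hy. apply A; auto; lra. }
  { intros kk d d' A B l Hl y Dy Hy. apply A; auto; lra. }
  set (U := fun p => exists y, D y /\ normN n (vsub y x0) < rho /\ phi y = p).
  exists U. split; [|split; [|split]].
  - intros p [y [Dy [_ E]]]. subst. apply HDW; auto.
  - intros p [y [Dy [Hy E]]]. subst p. split. apply HDW; auto.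
    destruct (HopW (phi y) (proj2 (HDW y Dy))) as [_ [rW [HrW BW]]].
    destruct (Hinv y Dy (rho - normN n (vsub y x0)) ltac:(lra)) as [dI [HdI I]].
    exists (Rmin rW dI). split. apply Rmin_pos; auto. intros p' Lp' Hp'.
    pose proof (Rmin_l rW dI); pose proof (Rmin_r rW dI).
    assert (W p') by (apply BW; [apply HLs; auto | lra]).
    destruct (Hsurj p' Lp' H1) as [y' [Dy' E']]. subst p'.
    exists y'. split; auto. split; auto.
    pose proof (I y' Dy' ltac:(lra)). pose proof (normN_sub_triang n y' y x0). lra.
  - exists x0. split; auto. split; auto. replace (vsub x0 x0) with (fun _ : nat => C0).
    rewrite normN_eq. rewrite (sumR_ext n _ (fun _ => 0)). rewrite sumR_const. lra.
    intros; apply cnorm_C0. apply functional_extensionality; intros; unfold vsub; cx.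
  - intros P [lam [p [Hlam [Up EP]]]] v Hv Hrad.
    destruct Up as [y [Dy [Hy Ep]]]. subst p.
    assert (EP' : P = vscale lam (Ev y)) by (rewrite EP; reflexivity). rewrite EP' in Hv, Hrad.
    assert (HUL : forall p, U p -> L p) by (intros p [z [Dz [_ E]]]; subst; apply HDW; auto).
    destruct (cone_decomp U y lam v HUL Dy Hlam Hv) as [a Ea].
    assert (H0 : hgamma n v (Ev y) = C0) by (apply Hrad; apply test0; auto; exists y; auto).
    assert (Hk : forall k, (k < n)%nat -> hgamma n v (vscale lam (Vv y k)) = C0).
    { intros k Hk. apply Hrad. apply testk; auto.
      exists (rho - normN n (vsub y x0)). split. lra. intros z Dz Hz. exists z. split; auto. split; auto.
      pose proof (normN_sub_triang n z y x0). lra. }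
    pose proof (radical_eqs y lam a v Hlam Ea H0 Hk) as Heqs.
    assert (Ha : forall l, (l < S n)%nat -> a l = C0).
    { apply (perturb (S n) (fun kk l => Mx x0 kk l) kap CK HL (Mx y) a); auto.
      intros kk l Hkk Hl. left. apply (Hcont kk Hkk l Hl y Dy Hy). }
    rewrite Ea. apply functional_extensionality; intros i. unfold vsum. rewrite sumC_zero. reflexivity.
    intros l Hl. rewrite Ha; auto. cx.
Qed.

End Main.

Theorem mainTheorem7 (n : nat) (L : CV -> Prop) (f : CV -> Cx) (q : CV) :
  lag_pair n L f -> kaehlerian n L ->
  L q -> tau q = q -> Im (f q) <> 0 ->
  exists U : CV -> Prop,
    (forall p, U p -> L p) /\ rel_open (2 * n) L U /\ U q /\
    nondeg_on (hgamma n) (cone U f).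
Proof.
  intros [[[HLs Hch] _] [Hhol Hdf]] Hk Lq Hreal Hf.
  destruct (Hch q Lq) as [phi [D [W [Hc Wq]]]].
  pose proof Hc as [HopD [HopW [[dphi [Hh Hind]] [HDW [Hsurj [_ Hinv]]]]]].
  destruct (Hsurj q Lq Wq) as [x0 [Dx0 Ex0]]. subst q.
  pose proof (Hhol phi D W Hc) as HfD.
  eapply (main_chart n L f phi D W dphi); eauto.
Qed.
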